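(* Fix integers $\tilde\ell\ge1$ and $\tilde m_1,\dots,\tilde m_{\tilde\ell}\ge1$ with $\sum_a\tilde m_a<d$, and let $\theta^*\in\Omega_b$. Suppose each of $n$ users is independently offered all $d$ items, draws a PL ranking with parameter $\theta^*$, and reveals the ordered partition consisting of the set of her top $\tilde m_1$ items, the set of the next $\tilde m_2$ items, ..., and the set of the remaining items. Then for every $M\ge\min_{a\in[\tilde\ell]}\tilde m_a$, the order-$M$ rank-breaking estimator $\widehat\theta\in\arg\max_{\theta\in\Omega_b}\mathcal{L}_{\rm RB}(\theta)$ is consistent, i.e. $\widehat\theta\to\theta^*$ as $n\to\infty$.
   Context: PL model: items $[d]$, parameter $\theta\in\mathbb{R}^d$; when a set $S$ is offered, a ranking $\sigma:[|S|]\to S$ (position 1 most preferred) is drawn with probability $\prod_{i=1}^{|S|-1}e^{\theta_{\sigma(i)}}/\sum_{i'=i}^{|S|}e^{\theta_{\sigma(i')}}$. $\Omega_b=\{\theta\in\mathbb{R}^d:\sum_i\theta_i=0,|\theta_i|\le b\}$. For disjoint nonempty $T,B$, $\mathbb{P}_\theta(B\prec T)=\sum_{\sigma}\prod_{u=1}^{|T|}\frac{e^{\theta_{\sigma(u)}}}{\sum_{c=u}^{|T|}e^{\theta_{\sigma(c)}}+\sum_{i\in B}e^{\theta_i}}$ (sum over orderings $\sigma$ of $T$). From each revealed ordered partition, one rank-breaking edge is formed for each of the first $\tilde\ell$ subsets: its top-set $T$ is that subset and its bottom-set $B$ is the union of all subsets below it. The order-$M$ log-likelihood $\mathcal{L}_{\rm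 RB}(\theta)$ is the sum over all users and all their edges with $|T|\le M$ of $\log\mathbb{P}_\theta(B\prec T)$. *)

(* Defs.v *)
From Stdlib Require Import Reals List Lia ClassicalEpsilon.
Import ListNotations.
Open Scope R_scope.

(* Items are 0..d-1.  A ranking of a set is a list (head = most preferred). *)

Fixpoint insert_all (x : nat) (l : list nat) : list (list nat) :=
  match l with
  | [] => [[x]]
  | y :: l' => (x :: y :: l') :: map (cons y) (insert_all x l')
  end.

Fixpoint perms (l : list nat) : list (list nat) :=
  match l with
  | [] => [[]]
  | x :: l' => flat_map (insert_all x) (perms l')
  end.

Definition sumR (l : list R) : R := fold_right Rplus 0 l.
Definition prodR (l : list R) : R := fold_right Rmult 1 l.

Definition wt (th : nat -> R) (i : nat) : R := exp (th i).
Definition sumw (th : nat -> R) (S : list nat) : R := sumR (map (wt th) S).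

(* PL probability of the ranking sigma of the offered set (= elements of sigma):
   prod_{i=1}^{|S|-1} e^{th sigma(i)} / sum_{i'>=i} e^{th sigma(i')} *)
Fixpoint pl_prob (th : nat -> R) (s : list nat) : R :=
  match s with
  | [] => 1
  | [_] => 1
  | x :: s' => wt th x / sumw th s * pl_prob th s'
  end.

Fixpoint top_prob (th : nat -> R) (B : list nat) (s : list nat) : R :=
  match s with
  | [] => 1
  | x :: s' => wt th x / (sumw th s + sumw th B) * top_prob th B s'
  end.

(* P_theta(B < T): sum over orderings of T *)
Definition edge_prob (th : nat -> R) (T B : list nat) : R :=
  sumR (map (top_prob th B) (perms T)).

Definition rankings (d : nat) : list (list nat) := perms (seq 0 d).

(* Contribution of one user, whose full ranking is sigma, to the order-M
   rank-breaking log-likelihood, for the revealed partition with block sizes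
   m = [m_1; ...; m_l] (followed by the remaining items).  The a-th edge has
   top-set = the a-th block and bottom-set = the union of all blocks below it;
   it is kept iff |T| = m_a <= M. *)
Fixpoint rb_user (th : nat -> R) (M : nat) (m : list nat) (sigma : list nat) : R :=
  match m with
  | [] => 0
  | ma :: m' =>
      (if Nat.leb ma M
       then ln (edge_prob th (firstn ma sigma) (skipn ma sigma))
       else 0)
      + rb_user th M m' (skipn ma sigma)
  end.

Definition L_RB (th : nat -> R) (M : nat) (m : list nat)
  (sample : list (list nat)) : R :=
  sumR (map (rb_user th M m) sample).

(* Omega_b (only coordinates 0..d-1 matter) *)
Definition Omega (d : nat) (b : R) (th : nat -> R) : Prop :=
  sumR (map th (seq 0 d)) = 0 /\ (forall i, (i < d)%nat -> Rabs (th i) <= b).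

Definition is_RB_estimate (d : nat) (b : R) (M : nat) (m : list nat)
  (sample : list (list nat)) (th : nat -> R) : Prop :=
  Omega d b th /\
  (forall th', Omega d b th' -> L_RB th' M m sample <= L_RB th M m sample).

Fixpoint samples (d n : nat) : list (list (list nat)) :=
  match n with
  | O => [[]]
  | S n' => flat_map (fun s => map (fun r => r :: s) (rankings d)) (samples d n')
  end.

Definition indic (P : Prop) : R :=
  if excluded_middle_informative P then 1 else 0.

Definition prob (d : nat) (th : nat -> R) (n : nat)
  (E : list (list nat) -> Prop) : R :=
  sumR (map (fun s => prodR (map (pl_prob th) s) * indic (E s)) (samples d n)).

(* Main.v *)
Require Import Defs.
From Stdlib Require Import Reals List.
From Stdlib Require Import Lia Permutation Lra Sorting ZArith ClassicalEpsilon.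
Import ListNotations.
Open Scope R_scope.

Lemma in_insert_all x l s : In s (insert_all x l) <->
  exists l1 l2, l = l1 ++ l2 /\ s = l1 ++ x :: l2.
Proof.
  revert s; induction l as [|y l IH]; intro s; simpl; split.
  - intros [<-|[]]. exists [], []; auto.
  - intros [l1 [l2 [E ->]]]. destruct l1, l2; simpl in *; try discriminate. left; auto.
  - intros [<-|H]. exists [], (y::l); auto.
    apply in_map_iff in H as [s' [<- H]]. apply IH in H as [l1 [l2 [-> ->]]].
    exists (y::l1), l2; auto.
  - intros [l1 [l2 [E ->]]]. destruct l1 as [|z l1]; simpl in *.
    + left; subst; auto.
    + inversion E; subst. right. apply in_map. apply IH. eauto.
Qed.

Lemma perms_in l s : In s (perms l) <-> Permutation l s.
Proof.
  revert s; induction l as [|x l IH]; intro s; simpl.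
  - split. intros [<-|[]]; auto. intro H. apply Permutation_nil in H. auto.
  - rewrite in_flat_map. split.
    + intros [p [Hp Hs]]. apply IH in Hp. apply in_insert_all in Hs as [l1 [l2 [-> ->]]].
      apply Permutation_cons_app. auto.
    + intro H. assert (Hx : In x s) by (apply (Permutation_in _ H); left; auto).
      apply in_split in Hx as [l1 [l2 ->]]. exists (l1++l2). split.
      apply IH. eapply Permutation_cons_app_inv; eauto.
      apply in_insert_all. eauto.
Qed.

Lemma NoDup_flat_map' {A B} (f : A -> list B) L :
  NoDup L -> (forall a, In a L -> NoDup (f a)) ->
  (forall a b y, In a L -> In b L -> In y (f a) -> In y (f b) -> a = b) ->
  NoDup (flat_map f L).
Proof.
  induction L as [|a L IH]; simpl; intros HL Hf Hd. constructor.
  inversion HL; subst. apply NoDup_app.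
  - apply Hf; left; auto.
  - apply IH; auto. intros; eapply Hd; eauto; right; auto.
  - intros y Y1 Y2. apply in_flat_map in Y2 as [b [Hb Y2]].
    assert (a = b) by (eapply Hd; [left|right|..]; eauto). subst. contradiction.
Qed.

Lemma NoDup_insert_all x p : ~ In x p -> NoDup (insert_all x p).
Proof.
  induction p as [|y p IH]; simpl; intro H.
  - constructor. auto. constructor.
  - constructor.
    + intro Hin. apply in_map_iff in Hin as [s [E _]]. inversion E. auto.
    + apply FinFun.Injective_map_NoDup. intros u v E; inversion E; auto. auto.
Qed.

Lemma split_uniq (x:nat) a1 a2 b1 b2 : a1 ++ x :: a2 = b1 ++ x :: b2 ->
  ~In x a1 -> ~In x b1 -> a1 = b1 /\ a2 = b2.
Proof.
  revert b1; induction a1 as [|u a1 IH]; intros [|v b1]; simpl; intros E H1 H2.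
  - inversion E; auto.
  - inversion E; subst. exfalso; auto.
  - inversion E; subst. exfalso; auto.
  - inversion E; subst. destruct (IH b1) as [-> ->]; auto.
Qed.

Lemma NoDup_perms l : NoDup l -> NoDup (perms l).
Proof.
  induction l as [|x l IH]; simpl; intro H. repeat constructor; auto.
  inversion H; subst. apply NoDup_flat_map'; auto.
  - intros p Hp. apply NoDup_insert_all. apply perms_in in Hp.
    intro. apply H2. eapply Permutation_in; [symmetry; eauto|]; auto.
  - intros p q s Hp Hq Y1 Y3. apply perms_in in Hp, Hq.
    apply in_insert_all in Y1 as [a1 [a2 [-> ->]]].
    apply in_insert_all in Y3 as [b1 [b2 [-> E]]].
    assert (Na : ~ In x (a1 ++ a2)) by (intro Hi; apply H2; eapply Permutation_in; [symmetry; apply Hp|]; auto).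
    assert (Nb : ~ In x (b1 ++ b2)) by (intro Hi; apply H2; eapply Permutation_in; [symmetry; apply Hq|]; auto).
    apply split_uniq in E as [-> ->]; auto.
    intro; apply Na; apply in_or_app; auto. intro; apply Nb; apply in_or_app; auto.
Qed.

Lemma sumR_app a b : sumR (a ++ b) = sumR a + sumR b.
Proof. induction a; simpl; [ring| rewrite IHa; ring]. Qed.

Lemma sumR_perm a b : Permutation a b -> sumR a = sumR b.
Proof. induction 1; simpl; try ring; congruence. Qed.

Lemma sumR_flat_map {A B} (f : B -> R) (g : A -> list B) L :
  sumR (map f (flat_map g L)) = sumR (map (fun a => sumR (map f (g a))) L).
Proof. induction L; simpl; auto. rewrite map_app, sumR_app, IHL; auto. Qed.

Lemma sumR_map_ext {A} (f g : A -> R) L : (forall a, In a L -> f a = g a) ->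
  sumR (map f L) = sumR (map g L).
Proof. intro H; f_equal; apply map_ext_in; auto. Qed.

Lemma sumR_le {A} (f g : A -> R) L : (forall a, In a L -> f a <= g a) ->
  sumR (map f L) <= sumR (map g L).
Proof. induction L; simpl; intros; [lra|]. apply Rplus_le_compat; auto. Qed.

Lemma sumR_nonneg {A} (f : A -> R) L : (forall a, In a L -> 0 <= f a) ->
  0 <= sumR (map f L).
Proof. induction L; simpl; intros; [lra|]. apply Rplus_le_le_0_compat; auto. Qed.

Lemma sumR_mult_l {A} c (f : A -> R) L : sumR (map (fun a => c * f a) L) = c * sumR (map f L).
Proof. induction L; simpl; [ring|rewrite IHL; ring]. Qed.

Lemma sumR_plus {A} (f g : A -> R) L : sumR (map (fun a => f a + g a) L) = sumR (map f L) + sumR (map g L).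
Proof. induction L; simpl; [ring|rewrite IHL; ring]. Qed.

Lemma sumR_minus {A} (f g : A -> R) L : sumR (map (fun a => f a - g a) L) = sumR (map f L) - sumR (map g L).
Proof. induction L; simpl; [ring|rewrite IHL; ring]. Qed.

Lemma sumR_ge_elem {A} (f : A -> R) L a : (forall b, In b L -> 0 <= f b) -> In a L ->
  f a <= sumR (map f L).
Proof.
  induction L; simpl; intros H Ha; [contradiction|].
  destruct Ha as [->|Ha].
  - assert (0 <= sumR (map f L)) by (apply sumR_nonneg; auto). lra.
  - assert (0 <= f a0) by auto. specialize (IHL (fun b Hb => H b (or_intror Hb)) Ha). lra.
Qed.

Lemma sumR_ge_elem_extra {A} (f g : A -> R) L a c : (forall b, In b L -> g b <= f b) -> In a L ->
  g a + c <= f a -> sumR (map g L) + c <= sumR (map f L).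
Proof.
  intros H Ha Hc. apply in_split in Ha as [L1 [L2 ->]].
  rewrite !map_app, !sumR_app. simpl.
  assert (sumR (map g L1) <= sumR (map f L1)) by (apply sumR_le; intros; apply H; apply in_or_app; auto).
  assert (sumR (map g L2) <= sumR (map f L2)) by (apply sumR_le; intros; apply H; apply in_or_app; simpl; auto).
  lra.
Qed.

Definition inb (x : nat) (S : list nat) : bool := existsb (Nat.eqb x) S.
Lemma inb_true x S : inb x S = true <-> In x S.
Proof.
  unfold inb. rewrite existsb_exists. split.
  - intros [y [Hy E]]. apply Nat.eqb_eq in E. subst; auto.
  - intros H. exists x. split; auto. apply Nat.eqb_refl.
Qed.
Lemma inb_false x S : inb x S = false <-> ~ In x S.
Proof. rewrite <- inb_true. destruct (inb x S); split; intros; try congruence; tauto. Qed.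

Definition diff (l S : list nat) := filter (fun x => negb (inb x S)) l.

Lemma in_diff x l S : In x (diff l S) <-> In x l /\ ~ In x S.
Proof.
  unfold diff. rewrite filter_In. rewrite Bool.negb_true_iff, inb_false. tauto.
Qed.

Lemma perm_filter_split (f : nat -> bool) l :
  Permutation l (filter f l ++ filter (fun x => negb (f x)) l).
Proof.
  induction l as [|x l IH]; simpl; auto.
  destruct (f x); simpl; auto.
  apply Permutation_cons_app; auto.
Qed.

Fixpoint combs (l : list nat) (k : nat) {struct l} : list (list nat) :=
  match k with
  | O => [[]]
  | S k' => match l with
            | [] => []
            | x :: l' => map (cons x) (combs l' k') ++ combs l' (S k')
            end
  end.

Lemma combs_incl l k S : In S (combs l k) -> incl S l.
Proof.
  revert k S; induction l as [|x l IH]; intros [|k] S; simpl; intros H.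
  - destruct H as [<-|[]]. intros y [].
  - contradiction.
  - destruct H as [<-|[]]. intros y [].
  - apply in_app_or in H as [H|H].
    + apply in_map_iff in H as [S' [<- H]]. intros y [<-|Hy]; [left; auto|right; eapply IH; eauto].
    + intros y Hy; right; eapply IH; eauto.
Qed.

Lemma combs_length l k S : In S (combs l k) -> length S = k.
Proof.
  revert k S; induction l as [|x l IH]; intros [|k] S; simpl; intros H.
  - destruct H as [<-|[]]; auto.
  - contradiction.
  - destruct H as [<-|[]]; auto.
  - apply in_app_or in H as [H|H].
    + apply in_map_iff in H as [S' [<- H]]. simpl. f_equal. eapply IH; eauto.
    + eapply IH; eauto.
Qed.

Lemma combs_filter l k S : In S (combs l k) -> NoDup l -> S = filter (fun y => inb y S) l.
Proof.
  revert k S; induction l as [|x l IH]; intros [|k] S; simpl; intros H Hl.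
  - destruct H as [<-|[]]; auto.
  - contradiction.
  - destruct H as [<-|[]]; simpl. clear. induction l; simpl; auto.
  - inversion Hl; subst.
    apply in_app_or in H as [H|H].
    + apply in_map_iff in H as [S' [<- H]].
      assert (E: inb x (x :: S') = true) by (apply inb_true; left; auto). rewrite E. f_equal.
      rewrite (IH _ _ H) at 1 by auto. apply filter_ext_in. intros y Hy.
      unfold inb; simpl. destruct (Nat.eqb y x) eqn:Eq; auto.
      apply Nat.eqb_eq in Eq; subst; contradiction.
    + assert (E: inb x S = false).
      { apply inb_false. intro Hx. apply H2. eapply combs_incl; eauto. }
      rewrite E. eapply IH; eauto.
Qed.

Lemma combs_NoDup_elem l k S : In S (combs l k) -> NoDup l -> NoDup S.
Proof. intros H Hl. rewrite (combs_filter _ _ _ H Hl). apply NoDup_filter; auto. Qed.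

Lemma filter_in_combs (f : nat -> bool) l : In (filter f l) (combs l (length (filter f l))).
Proof.
  induction l as [|x l IH]; simpl. left; auto.
  destruct (f x); simpl.
  - apply in_or_app; left. apply in_map; auto.
  - destruct (length (filter f l)) eqn:E.
    + apply length_zero_iff_nil in E. rewrite E. left; auto.
    + apply in_or_app; right. auto.
Qed.

Lemma combs_NoDup l k : NoDup l -> NoDup (combs l k).
Proof.
  revert k; induction l as [|x l IH]; intros [|k] Hl; simpl; try (repeat constructor; auto; fail).
  inversion Hl; subst. apply NoDup_app.
  - apply FinFun.Injective_map_NoDup. intros u v E; inversion E; auto. auto.
  - auto.
  - intros S Y1 Y3. apply in_map_iff in Y1 as [S' [<- _]].
    apply combs_incl in Y3. apply H1. apply Y3. left; auto.
Qed.

Lemma combs_eq_of_members l k1 k2 S1 S2 : NoDup l -> In S1 (combs l k1) -> In S2 (combs l k2) ->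
  (forall x, In x S1 <-> In x S2) -> S1 = S2.
Proof.
  intros Hl H1 H2 E. rewrite (combs_filter _ _ _ H1 Hl), (combs_filter _ _ _ H2 Hl).
  apply filter_ext. intro y. destruct (inb y S1) eqn:A, (inb y S2) eqn:B; auto.
  - apply inb_true in A. apply inb_false in B. exfalso; apply B, E; auto.
  - apply inb_false in A. apply inb_true in B. exfalso; apply A, E; auto.
Qed.

Lemma perm_of_combs l k S : NoDup l -> In S (combs l k) -> Permutation l (S ++ diff l S).
Proof.
  intros Hl H. pose proof (perm_filter_split (fun y => inb y S) l) as P.
  rewrite <- (combs_filter _ _ _ H Hl) in P. exact P.
Qed.

Lemma NoDup_diff l S : NoDup l -> NoDup (diff l S).
Proof. intros; apply NoDup_filter; auto. Qed.

Lemma firstn_length_app {A} (t r : list A) : firstn (length t) (t ++ r) = t.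
Proof. induction t; simpl; auto. f_equal; auto. Qed.
Lemma skipn_length_app {A} (t r : list A) : skipn (length t) (t ++ r) = r.
Proof. induction t; simpl; auto. Qed.

Definition decomp (l : list nat) (k : nat) : list (list nat) :=
  flat_map (fun S => flat_map (fun t => map (app t) (perms (diff l S))) (perms S)) (combs l k).

Lemma decomp_in l k s : NoDup l -> (k <= length l)%nat ->
  (In s (decomp l k) <-> Permutation l s).
Proof.
  intros Hl Hk. unfold decomp. rewrite in_flat_map. split.
  - intros [S [HS Hs]]. apply in_flat_map in Hs as [t [Ht Hs]]. apply in_map_iff in Hs as [r [<- Hr]].
    apply perms_in in Ht, Hr. eapply Permutation_trans. eapply perm_of_combs; eauto.
    apply Permutation_app; auto.
  - intros Hp. assert (Hs : NoDup s) by (eapply Permutation_NoDup; eauto).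
    set (t := firstn k s). set (r := skipn k s).
    assert (Hts : s = t ++ r) by (symmetry; apply firstn_skipn).
    assert (Ht : NoDup t /\ NoDup r /\ forall x, In x t -> ~ In x r).
    { rewrite Hts in Hs. repeat split. eapply NoDup_app_remove_r; eauto. eapply NoDup_app_remove_l; eauto.
      intros x X1 X2. clear Hts. induction t; simpl in *; auto. inversion Hs; subst.
      destruct X1 as [->|X1]; auto. apply H1; apply in_or_app; auto. }
    destruct Ht as [Nt [Nr Dtr]].
    set (S := filter (fun y => inb y t) l).
    assert (PS : Permutation S t).
    { apply NoDup_Permutation. apply NoDup_filter; auto. auto.
      intro x. unfold S. rewrite filter_In, inb_true. split; [tauto|].
      intro H; split; auto. apply (Permutation_in _ (Permutation_sym Hp)). rewrite Hts. apply in_or_app; auto. }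
    assert (LS : length S = k).
    { rewrite (Permutation_length PS). unfold t. rewrite length_firstn. rewrite (Permutation_length Hp) in Hk. lia. }
    exists S. split. rewrite <- LS. apply filter_in_combs.
    apply in_flat_map. exists t. split. apply perms_in. auto.
    apply in_map_iff. exists r. split; [symmetry; auto|]. apply perms_in.
    apply NoDup_Permutation. apply NoDup_diff; auto. auto.
    intro x. rewrite in_diff. unfold S. rewrite filter_In, inb_true. split.
    + intros [X1 X2]. assert (In x s) by (eapply Permutation_in; eauto).
      rewrite Hts in H. apply in_app_or in H as [H|H]; auto. exfalso; auto.
    + intros X. split. apply (Permutation_in _ (Permutation_sym Hp)). rewrite Hts. apply in_or_app; auto.
      intros [_ X2]. eapply Dtr; eauto.
Qed.

Lemma decomp_NoDup l k : NoDup l -> NoDup (decomp l k).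
Proof.
  intro Hl. unfold decomp. apply NoDup_flat_map'.
  - apply combs_NoDup; auto.
  - intros S HS. apply NoDup_flat_map'.
    + apply NoDup_perms. eapply combs_NoDup_elem; eauto.
    + intros t _. apply FinFun.Injective_map_NoDup. intros u v E. eapply app_inv_head; eauto.
      apply NoDup_perms, NoDup_diff; auto.
    + intros t1 t2 y H1 H2 Y1 Y2. apply in_map_iff in Y1 as [r1 [<- _]]. apply in_map_iff in Y2 as [r2 [E _]].
      apply perms_in in H1, H2. apply Permutation_length in H1, H2.
      assert (length t1 = length t2) by lia.
      rewrite <- (firstn_length_app t1 r1), <- E, H. apply firstn_length_app.
  - intros S1 S2 y H1 H2 Y1 Y2.
    apply in_flat_map in Y1 as [t1 [T1 Y1]]. apply in_map_iff in Y1 as [r1 [<- _]].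
    apply in_flat_map in Y2 as [t2 [T2 Y2]]. apply in_map_iff in Y2 as [r2 [E _]].
    apply perms_in in T1, T2.
    assert (L1 := combs_length _ _ _ H1). assert (L2 := combs_length _ _ _ H2).
    assert (t1 = t2).
    { assert (length t1 = length t2) by (rewrite <- (Permutation_length T1), <- (Permutation_length T2); lia).
      rewrite <- (firstn_length_app t1 r1), <- E, H. apply firstn_length_app. }
    subst t2. eapply combs_eq_of_members; eauto. intro x. split; intro Hx.
    + exact (Permutation_in _ (Permutation_sym T2) (Permutation_in _ T1 Hx)).
    + exact (Permutation_in _ (Permutation_sym T1) (Permutation_in _ T2 Hx)).
Qed.

Lemma sum_decomp (F : list nat -> R) l k : NoDup l -> (k <= length l)%nat ->
  sumR (map F (perms l)) =
  sumR (map (fun S => sumR (map (fun t => sumR (map (fun r => F (t ++ r)) (perms (diff l S)))) (perms S))) (combs l k)).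
Proof.
  intros Hl Hk.
  transitivity (sumR (map F (decomp l k))).
  - apply sumR_perm, Permutation_map. apply NoDup_Permutation.
    apply NoDup_perms; auto. apply decomp_NoDup; auto.
    intro s. rewrite perms_in, decomp_in; tauto.
  - unfold decomp. rewrite sumR_flat_map. apply sumR_map_ext. intros S _.
    rewrite sumR_flat_map. apply sumR_map_ext. intros t _. rewrite map_map. auto.
Qed.

Lemma decomp_perm l k S t r : NoDup l -> In S (combs l k) -> In t (perms S) -> In r (perms (diff l S)) ->
  Permutation l (t ++ r).
Proof.
  intros Hl HS Ht Hr. apply perms_in in Ht, Hr. eapply Permutation_trans. eapply perm_of_combs; eauto.
  apply Permutation_app; auto.
Qed.

Lemma combs_0 l : combs l 0 = [[]].
Proof. destruct l; auto. Qed.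
Lemma combs_1 l : combs l 1 = map (fun x => [x]) l.
Proof. induction l; simpl; auto. rewrite IHl, combs_0. auto. Qed.

Definition sw (w : nat -> R) (S : list nat) := sumR (map w S).
Fixpoint topw (w : nat -> R) (beta : R) (s : list nat) : R :=
  match s with [] => 1 | x :: s' => w x / (sw w s + beta) * topw w beta s' end.
Definition Ew w T beta := sumR (map (topw w beta) (perms T)).

Lemma sw_app w a b : sw w (a ++ b) = sw w a + sw w b.
Proof. unfold sw. rewrite map_app, sumR_app. auto. Qed.
Lemma sw_perm w a b : Permutation a b -> sw w a = sw w b.
Proof. intro; unfold sw; apply sumR_perm, Permutation_map; auto. Qed.
Lemma sw_nonneg w a : (forall x, 0 < w x) -> 0 <= sw w a.
Proof. intros; unfold sw; apply sumR_nonneg; intros; left; auto. Qed.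
Lemma sw_cons w x a : sw w (x :: a) = w x + sw w a.
Proof. reflexivity. Qed.

Lemma top_prob_topw th B s : top_prob th B s = topw (wt th) (sw (wt th) B) s.
Proof. induction s; simpl; auto. rewrite IHs. auto. Qed.

Lemma edge_Ew th T B : edge_prob th T B = Ew (wt th) T (sw (wt th) B).
Proof. unfold edge_prob, Ew. f_equal. apply map_ext. intro; apply top_prob_topw. Qed.

Lemma wt_pos th x : 0 < wt th x.
Proof. unfold wt; apply exp_pos. Qed.

Lemma pl_cons th x s : pl_prob th (x :: s) = wt th x / sumw th (x :: s) * pl_prob th s.
Proof.
  destruct s as [|y s]. simpl. unfold sumw; simpl. field. pose proof (wt_pos th x); lra.
  reflexivity.
Qed.

Lemma pl_app th t r : pl_prob th (t ++ r) = topw (wt th) (sw (wt th) r) t * pl_prob th r.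
Proof.
  induction t as [|x t IH]. simpl; ring.
  change ((x::t)++r) with (x :: (t++r)). rewrite pl_cons, IH.
  change (topw (wt th) (sw (wt th) r) (x :: t)) with
    (wt th x / (sw (wt th) (x::t) + sw (wt th) r) * topw (wt th) (sw (wt th) r) t). unfold sumw. change (sumR (map (wt th) (x :: t ++ r))) with (sw (wt th) (x :: t ++ r)).
  rewrite sw_cons, sw_app, sw_cons. rewrite Rplus_assoc. rewrite Rmult_assoc; reflexivity.
Qed.

Lemma diff_single_length l x : NoDup l -> In x l -> length (diff l [x]) = pred (length l).
Proof.
  intros Hl Hx.
  assert (HS : In [x] (combs l 1)) by (rewrite combs_1; apply (in_map (fun y => [y])); auto).
  pose proof (Permutation_length (perm_of_combs _ _ _ Hl HS)). simpl in H. lia.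
Qed.

Lemma sum_decomp1 (F : list nat -> R) l : NoDup l -> l <> [] ->
  sumR (map F (perms l)) =
  sumR (map (fun x => sumR (map (fun r => F (x :: r)) (perms (diff l [x])))) l).
Proof.
  intros Hl Hne. destruct l as [|y l']. congruence.
  rewrite (sum_decomp F (y::l') 1) by (auto; simpl; lia).
  rewrite combs_1, map_map. apply sumR_map_ext. intros x _. simpl. ring.
Qed.

Lemma pl_sum1 th l : NoDup l -> sumR (map (pl_prob th) (perms l)) = 1.
Proof.
  remember (length l) as n eqn:En. revert l En. induction n as [n IH] using (well_founded_induction Wf_nat.lt_wf).
  intros l En Hl. destruct (list_eq_dec Nat.eq_dec l []) as [E|Hne]. subst; simpl; ring.
  rewrite sum_decomp1 by auto.
  transitivity (sumR (map (fun x => wt th x / sw (wt th) l) l)).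
  - apply sumR_map_ext. intros x Hx.
    transitivity (sumR (map (fun r => wt th x / sw (wt th) l * pl_prob th r) (perms (diff l [x])))).
    + apply sumR_map_ext. intros r Hr. rewrite pl_cons. f_equal. f_equal.
      apply sw_perm. apply perms_in in Hr.
      assert (HS : In [x] (combs l 1)) by (rewrite combs_1; apply (in_map (fun y => [y])); auto).
      pose proof (perm_of_combs _ _ _ Hl HS) as P. simpl in P. eapply Permutation_trans; [|symmetry; exact P].
      constructor; symmetry; auto.
    + rewrite sumR_mult_l. rewrite (IH (length (diff l [x]))); auto. ring.
      rewrite diff_single_length by auto. subst n. destruct l; [congruence|simpl; lia]. apply NoDup_diff; auto.
  - unfold Rdiv.
    transitivity (sumR (map (fun x => / sw (wt th) l * wt th x) l)). apply sumR_map_ext; intros; ring.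
    rewrite sumR_mult_l. fold (sw (wt th) l).
    assert (0 < sw (wt th) l). { destruct l as [|y l']; [congruence|]. rewrite sw_cons. pose proof (wt_pos th y).
      pose proof (sw_nonneg (wt th) l' (wt_pos th)). lra. }
    field. lra.
Qed.

Section W.
Variable w : nat -> R.
Hypothesis wpos : forall x, 0 < w x.

Lemma sw_pos_cons x s : 0 < sw w (x::s).
Proof. rewrite sw_cons. pose proof (wpos x). pose proof (sw_nonneg w s wpos). lra. Qed.

Lemma topw_pos b s : 0 <= b -> 0 < topw w b s.
Proof.
  intro Hb. induction s as [|x s IH]; simpl. lra.
  apply Rmult_lt_0_compat; auto. apply Rdiv_lt_0_compat; auto.
  pose proof (sw_pos_cons x s). lra.
Qed.

Lemma Ew_pos T b : 0 <= b -> 0 < Ew w T b.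
Proof.
  intro Hb. unfold Ew. apply Rlt_le_trans with (topw w b T). apply topw_pos; auto.
  apply (sumR_ge_elem (topw w b)). intros; left; apply topw_pos; auto.
  apply perms_in; reflexivity.
Qed.

Lemma Ew_nil b : Ew w [] b = 1.
Proof. unfold Ew; simpl. ring. Qed.

Lemma sw_mem_le s T : NoDup s -> incl s T -> NoDup T -> sw w s <= sw w T.
Proof.
  intros Hs Hi HT.
  assert (P : Permutation T (filter (fun y => inb y s) T ++ diff T s)) by apply perm_filter_split.
  rewrite (sw_perm _ _ _ P), sw_app.
  assert (Permutation s (filter (fun y => inb y s) T)).
  { apply NoDup_Permutation; auto. apply NoDup_filter; auto. intro x. rewrite filter_In, inb_true. split; auto. tauto. }
  rewrite (sw_perm _ _ _ H). pose proof (sw_nonneg w (diff T s) wpos). lra.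
Qed.
End W.

Lemma topw_ext w w' b s : (forall x, In x s -> w x = w' x) -> topw w b s = topw w' b s.
Proof.
  induction s as [|x s IH]; simpl; intros H; auto.
  assert (E : sw w (x::s) = sw w' (x::s)) by (unfold sw; f_equal; apply map_ext_in; auto).
  rewrite E, H, IH by auto. auto.
Qed.

Lemma Ew_ext w w' T b : (forall x, In x T -> w x = w' x) -> Ew w T b = Ew w' T b.
Proof.
  intro H. unfold Ew. apply sumR_map_ext. intros s Hs. apply topw_ext.
  intros x Hx. apply H. apply perms_in in Hs. eapply Permutation_in; [symmetry; exact Hs|]; auto.
Qed.

Lemma Ew_perm w T T' b : NoDup T -> Permutation T T' -> Ew w T b = Ew w T' b.
Proof.
  intros HT P. unfold Ew. apply sumR_perm, Permutation_map, NoDup_Permutation.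
  apply NoDup_perms; auto. apply NoDup_perms. eapply Permutation_NoDup; eauto.
  intro s; rewrite !perms_in. split; intro H.
  exact (Permutation_trans (Permutation_sym P) H). exact (Permutation_trans P H).
Qed.

Lemma Ew_rec w T b : (forall x, 0 < w x) -> 0 <= b -> NoDup T -> T <> [] ->
  Ew w T b = sumR (map (fun x => w x / (sw w T + b) * Ew w (diff T [x]) b) T).
Proof.
  intros wpos Hb HT Hne. unfold Ew at 1. rewrite sum_decomp1 by auto.
  apply sumR_map_ext. intros x Hx. unfold Ew. rewrite <- sumR_mult_l.
  apply sumR_map_ext. intros r Hr. simpl. f_equal. f_equal. f_equal.
  apply sw_perm. apply perms_in in Hr.
  assert (HS : In [x] (combs T 1)) by (rewrite combs_1; apply (in_map (fun y => [y])); auto).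
  pose proof (perm_of_combs _ _ _ HT HS) as P. simpl in P. eapply Permutation_trans; [|symmetry; exact P].
  constructor; symmetry; auto.
Qed.

Lemma len_ind (P : list nat -> Prop) :
  (forall T, (forall T', (length T' < length T)%nat -> P T') -> P T) -> forall T, P T.
Proof.
  intros H T. remember (length T) as n eqn:En. revert T En.
  induction n as [n IH] using (well_founded_induction Wf_nat.lt_wf).
  intros T En. apply H. intros T' HT'. eapply IH; eauto. lia.
Qed.

Lemma sw_diff1 w T x : NoDup T -> In x T -> sw w T = w x + sw w (diff T [x]).
Proof.
  intros HT Hx. assert (HS : In [x] (combs T 1)) by (rewrite combs_1; apply (in_map (fun y => [y])); auto).
  pose proof (perm_of_combs _ _ _ HT HS) as P. rewrite (sw_perm _ _ _ P). reflexivity.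
Qed.

Lemma diff1_lt T x : NoDup T -> In x T -> (length (diff T [x]) < length T)%nat.
Proof. intros. rewrite diff_single_length by auto. destruct T; [contradiction|simpl; lia]. Qed.

Lemma Ew_le1 w T b : (forall x, 0 < w x) -> 0 <= b -> NoDup T -> Ew w T b <= 1.
Proof.
  intros wpos Hb. revert T. apply (len_ind (fun T => NoDup T -> Ew w T b <= 1)). intros T IH HT.
  destruct (list_eq_dec Nat.eq_dec T []) as [->|Hne]. rewrite Ew_nil; lra.
  rewrite Ew_rec by auto.
  apply Rle_trans with (sumR (map (fun x => w x / (sw w T + b)) T)).
  - apply sumR_le. intros x Hx. rewrite <- (Rmult_1_r (w x / (sw w T + b))) at 2.
    apply Rmult_le_compat_l. destruct T; [congruence|]. pose proof (sw_pos_cons w wpos n T).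
    pose proof (wpos x). left; apply Rdiv_lt_0_compat; lra.
    apply IH. apply diff1_lt; auto. apply NoDup_diff; auto.
  - unfold Rdiv. rewrite (sumR_map_ext _ (fun x => / (sw w T + b) * w x)) by (intros; ring).
    rewrite sumR_mult_l. fold (sw w T). destruct T; [congruence|]. pose proof (sw_pos_cons w wpos n T).
    apply (Rmult_le_reg_l (sw w (n::T) + b)). lra. field_simplify; lra.
Qed.

Lemma sw_scale c w s : sw (fun x => c * w x) s = c * sw w s.
Proof. unfold sw. apply sumR_mult_l. Qed.

Lemma Ew_scale c w T b : 0 < c -> (forall x, 0 < w x) -> 0 <= b ->
  Ew (fun x => c * w x) T (c * b) = Ew w T b.
Proof.
  intros Hc wpos Hb. unfold Ew. apply sumR_map_ext. intros s _.
  induction s as [|x s IH]; simpl; auto. rewrite IH, sw_scale.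
  pose proof (sw_pos_cons w wpos x s). field. split; [lra|]. apply Rgt_not_eq. nra.
Qed.

Lemma topw_beta_mono w b b' s : (forall x, 0 < w x) -> 0 <= b -> b <= b' -> topw w b' s <= topw w b s.
Proof.
  intros wpos Hb Hbb. induction s as [|x s IH]; simpl. lra.
  pose proof (sw_pos_cons w wpos x s). pose proof (wpos x).
  pose proof (topw_pos w wpos b' s ltac:(lra)).
  apply Rmult_le_compat; auto. left; apply Rdiv_lt_0_compat; lra. lra.
  unfold Rdiv. apply Rmult_le_compat_l. lra. apply Rinv_le_contravar; lra.
Qed.

Lemma Ew_beta_mono w T b b' : (forall x, 0 < w x) -> 0 <= b -> b <= b' -> Ew w T b' <= Ew w T b.
Proof. intros. unfold Ew. apply sumR_le. intros; apply topw_beta_mono; auto. Qed.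

Lemma Ew_beta_strict w T b b' : (forall x, 0 < w x) -> 0 <= b -> b <= b' -> T <> [] ->
  Ew w T b' * (sw w T + b') <= Ew w T b * (sw w T + b).
Proof.
  intros wpos Hb Hbb Hne. unfold Ew. rewrite Rmult_comm, <- sumR_mult_l, Rmult_comm, <- sumR_mult_l.
  apply sumR_le. intros s Hs. apply perms_in in Hs.
  destruct s as [|x s]. apply Permutation_sym, Permutation_nil in Hs. congruence.
  rewrite (sw_perm w _ _ Hs). simpl.
  pose proof (sw_pos_cons w wpos x s). pose proof (wpos x).
  pose proof (topw_beta_mono w b b' s wpos Hb Hbb).
  pose proof (topw_pos w wpos b' s ltac:(lra)).
  replace ((sw w (x :: s) + b') * (w x / (sw w (x :: s) + b') * topw w b' s)) with (w x * topw w b' s) by (field; lra).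
  replace ((sw w (x :: s) + b) * (w x / (sw w (x :: s) + b) * topw w b s)) with (w x * topw w b s) by (field; lra).
  apply Rmult_le_compat_l; lra.
Qed.

Lemma topw_lb w b s a K : (forall x, 0 < w x) -> 0 <= b -> 0 < a ->
  (forall x, In x s -> a <= w x) -> sw w s + b <= K -> (a / K) ^ length s <= topw w b s.
Proof.
  intros wpos Hb Ha. induction s as [|x s IH]; simpl; intros Hw HK. lra.
  pose proof (sw_pos_cons w wpos x s). pose proof (wpos x).
  assert (HK' : sw w s + b <= K) by (rewrite sw_cons in HK; lra).
  apply Rmult_le_compat.
  - left; apply Rdiv_lt_0_compat; lra.
  - apply pow_le. left; apply Rdiv_lt_0_compat; lra.
  - unfold Rdiv. apply Rmult_le_compat; try lra.
    all: first [left; apply Rinv_0_lt_compat; lra | apply Hw; left; auto | apply Rinv_le_contravar; lra].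
  - apply IH; auto; intros; apply Hw; right; auto.
Qed.

Lemma Ew_lb w T b a K : (forall x, 0 < w x) -> 0 <= b -> 0 < a ->
  (forall x, In x T -> a <= w x) -> sw w T + b <= K -> (a / K) ^ length T <= Ew w T b.
Proof.
  intros wpos Hb Ha Hw HK. unfold Ew. eapply Rle_trans. apply topw_lb; eauto.
  apply (sumR_ge_elem (topw w b)). intros; left; apply topw_pos; auto.
  apply perms_in; reflexivity.
Qed.

Lemma diff_comm l A B : diff (diff l A) B = diff (diff l B) A.
Proof.
  induction l as [|x l IH]; simpl; auto. unfold diff in *; simpl.
  destruct (inb x A) eqn:EA, (inb x B) eqn:EB; simpl; try rewrite EA; try rewrite EB; simpl; auto; f_equal; auto.
Qed.

Lemma sum_split_t (f : nat -> R) T t : NoDup T -> In t T ->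
  sumR (map f T) = f t + sumR (map f (diff T [t])).
Proof.
  intros HT Ht. assert (HS : In [t] (combs T 1)) by (rewrite combs_1; apply (in_map (fun y => [y])); auto).
  pose proof (perm_of_combs _ _ _ HT HS) as P. rewrite (sumR_perm _ _ (Permutation_map f P)). reflexivity.
Qed.

Lemma incl_diff l A : incl (diff l A) l.
Proof. intros x Hx. apply in_diff in Hx; tauto. Qed.

Lemma sw_diff_le w l A : (forall x, 0 < w x) -> NoDup l -> sw w (diff l A) <= sw w l.
Proof. intros. apply sw_mem_le; auto. apply NoDup_diff; auto. apply incl_diff. Qed.

Section Gap.
Variables (w : nat -> R) (a K beta : R).
Hypothesis wpos : forall x, 0 < w x.
Hypothesis apos : 0 < a.
Hypothesis Hb : a <= beta.

Lemma gap_lemma : forall T t, NoDup T -> In t T -> (forall x, In x T -> a <= w x) -> sw w T + beta <= K ->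
  (a / K) ^ length T <= Ew w (diff T [t]) beta - Ew w T beta.
Proof.
  apply (len_ind (fun T => forall t, NoDup T -> In t T -> (forall x, In x T -> a <= w x) -> sw w T + beta <= K ->
     (a / K) ^ length T <= Ew w (diff T [t]) beta - Ew w T beta)).
  intros T IH t HT Ht Hw HK.
  set (T' := diff T [t]).
  assert (Hne : T <> []) by (intro E; subst; contradiction).
  assert (NT' : NoDup T') by (apply NoDup_diff; auto).
  assert (LT' : length T' = pred (length T)) by (apply diff_single_length; auto).
  assert (SW : sw w T = w t + sw w T') by (apply sw_diff1; auto).
  set (W := sw w T + beta).
  assert (Wpos : 0 < W) by (unfold W; pose proof (sw_nonneg w T wpos); lra).
  assert (Kpos : 0 < K) by (unfold W in *; pose proof (sw_nonneg w T wpos); lra).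
  assert (ET : Ew w T beta * W = w t * Ew w T' beta + sumR (map (fun x => w x * Ew w (diff T [x]) beta) T')).
  { rewrite (Ew_rec w T beta wpos ltac:(lra) HT Hne). rewrite Rmult_comm, <- sumR_mult_l.
    rewrite (sum_split_t _ T t) by auto. fold T'. unfold W in *. f_equal. field; lra.
    apply sumR_map_ext; intros; field; lra. }
  destruct (list_eq_dec Nat.eq_dec T' []) as [E0|Hne'].
  - rewrite E0 in *. rewrite Ew_nil. simpl in ET. rewrite Ew_nil in ET.
    assert (LT : length T = 1%nat) by (destruct T as [|y [|z T0]]; simpl in *; auto; try lia).
    rewrite LT. simpl. unfold sw in SW; simpl in SW.
    assert (EWT: Ew w T beta * (w t + beta) = w t).
    { unfold W in ET. unfold sw in ET. rewrite SW in ET. lra. }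
    pose proof (wpos t).
    assert (HK2 : w t + beta <= K) by (unfold W in *; unfold sw in HK; rewrite SW in HK; lra).
    apply (Rmult_le_reg_r (w t + beta)). lra.
    replace ((1 - Ew w T beta) * (w t + beta)) with beta by lra.
    rewrite Rmult_1_r. unfold Rdiv. rewrite Rmult_assoc.
    apply Rle_trans with (a * 1). apply Rmult_le_compat_l. lra.
    apply (Rmult_le_reg_l K). lra. field_simplify; lra. lra.
  - assert (ET' : Ew w T' beta * (W - w t) = sumR (map (fun x => w x * Ew w (diff T' [x]) beta) T')).
    { rewrite (Ew_rec w T' beta wpos ltac:(lra) NT' Hne'). rewrite Rmult_comm, <- sumR_mult_l.
      apply sumR_map_ext. intros x _. unfold W. rewrite SW.
      assert (0 < sw w T' + beta) by (pose proof (sw_nonneg w T' wpos); lra). field; lra. }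
    assert (KEY : W * (Ew w T' beta - Ew w T beta) =
      sumR (map (fun x => w x * (Ew w (diff T' [x]) beta - Ew w (diff T [x]) beta)) T')).
    { rewrite (sumR_map_ext _ (fun x => w x * Ew w (diff T' [x]) beta - w x * Ew w (diff T [x]) beta)) by (intros; ring).
      rewrite sumR_minus, <- ET'.
      replace (sumR (map (fun x => w x * Ew w (diff T [x]) beta) T')) with (Ew w T beta * W - w t * Ew w T' beta) by lra.
      ring. }
    destruct T' as [|x0 T0] eqn:ET0; [congruence|]. rewrite <- ET0 in *.
    assert (Hx0 : In x0 T') by (rewrite ET0; left; auto).
    assert (Tx0 : In x0 T) by (apply in_diff in Hx0; tauto).
    assert (IHx : forall x, In x T' -> (a / K) ^ pred (length T) <= Ew w (diff T' [x]) beta - Ew w (diff T [x]) beta).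
    { intros x Hx. assert (Tx : In x T) by (apply in_diff in Hx; tauto).
      assert (xt : x <> t) by (apply in_diff in Hx; intros ->; apply (proj2 Hx); left; auto).
      unfold T'. rewrite diff_comm.
      rewrite <- (diff_single_length T x) by auto.
      apply IH. apply diff1_lt; auto. apply NoDup_diff; auto.
      apply in_diff. split; auto. intros [E|[]]; auto.
      intros y Hy; apply Hw; eapply incl_diff; eauto.
      pose proof (sw_diff_le w T [x] wpos HT). lra. }
    assert (S0 : w x0 * (a / K) ^ pred (length T) <=
       sumR (map (fun x => w x * (Ew w (diff T' [x]) beta - Ew w (diff T [x]) beta)) T')).
    { apply Rle_trans with (sumR (map (fun x => 0) T') + w x0 * (a / K) ^ pred (length T)).
      - assert (sumR (map (fun _ : nat => 0) T') = 0) by (clear; induction T'; simpl; auto; lra). lra.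
      - apply sumR_ge_elem_extra with x0; auto.
        + intros y Hy. pose proof (IHx y Hy). pose proof (wpos y).
          assert (0 <= (a/K) ^ pred (length T)) by (apply pow_le; left; apply Rdiv_lt_0_compat; lra).
          apply Rmult_le_pos; lra.
        + rewrite Rplus_0_l. apply Rmult_le_compat_l. left; auto. auto. }
    destruct T as [|y T1]; [congruence|]. simpl pred in *. simpl length.
    assert (Hw0 : a <= w x0) by auto.
    assert (W <= K) by (unfold W; lra).
    assert (0 <= (a/K) ^ length T1) by (apply pow_le; left; apply Rdiv_lt_0_compat; lra).
    apply (Rmult_le_reg_l W); auto. rewrite KEY. eapply Rle_trans; [|exact S0].
    simpl. rewrite <- Rmult_assoc. apply Rmult_le_compat_r; auto.
    apply Rle_trans with a; [|auto]. unfold Rdiv. rewrite <- Rmult_assoc. apply (Rmult_le_reg_r K). lra. rewrite Rmult_assoc, Rinv_l, Rmult_1_r by lra. nra.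
Qed.
End Gap.

Definition upd (w : nat -> R) t u := fun x => if Nat.eqb x t then u else w x.

Lemma Ew_rec_W w T beta t : (forall x, 0 < w x) -> 0 <= beta -> NoDup T -> In t T ->
  Ew w T beta * (sw w T + beta) = w t * Ew w (diff T [t]) beta +
     sumR (map (fun x => w x * Ew w (diff T [x]) beta) (diff T [t])).
Proof.
  intros wpos Hb HT Ht.
  assert (Hne : T <> []) by (intro E; subst; contradiction).
  assert (0 < sw w T + beta).
  { destruct T as [|y T]; [congruence|]. pose proof (sw_pos_cons w wpos y T); lra. }
  rewrite (Ew_rec w T beta wpos Hb HT Hne). rewrite Rmult_comm, <- sumR_mult_l.
  rewrite (sum_split_t _ T t) by auto. f_equal. field; lra.
  apply sumR_map_ext; intros; field; lra.
Qed.

Section Mono.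
Variables (w : nat -> R) (a K beta u' : R) (t : nat).
Hypothesis wpos : forall x, 0 < w x.
Hypothesis apos : 0 < a.
Hypothesis Hb : a <= beta.
Hypothesis Hu : w t <= u'.

Lemma mono1 : forall T, NoDup T -> (forall x, In x T -> a <= w x) -> sw (upd w t u') T + beta <= K ->
  Ew w T beta <= Ew (upd w t u') T beta /\
  (In t T -> (u' - w t) * (a/K)^(length T) / (sw (upd w t u') T + beta) <= Ew (upd w t u') T beta - Ew w T beta).
Proof.
  set (w' := upd w t u').
  assert (w'pos : forall x, 0 < w' x).
  { intro x. unfold w', upd. destruct (Nat.eqb x t) eqn:E; auto. apply Nat.eqb_eq in E; subst.
    pose proof (wpos t); lra. }
  assert (wle : forall x, w x <= w' x).
  { intro x. unfold w', upd. destruct (Nat.eqb x t) eqn:E; [|lra]. apply Nat.eqb_eq in E; subst; auto. }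
  apply (len_ind (fun T => NoDup T -> (forall x, In x T -> a <= w x) -> sw w' T + beta <= K ->
    Ew w T beta <= Ew w' T beta /\
    (In t T -> (u' - w t) * (a/K)^(length T) / (sw w' T + beta) <= Ew w' T beta - Ew w T beta))).
  intros T IH HT Hw HK.
  assert (swle : forall S, sw w S <= sw w' S) by (intro S; unfold sw; apply sumR_le; auto).
  destruct (in_dec Nat.eq_dec t T) as [Ht|Ht].
  2:{ split; [|contradiction]. right. apply Ew_ext. intros x Hx. unfold w', upd.
      destruct (Nat.eqb x t) eqn:E; auto. apply Nat.eqb_eq in E; subst; contradiction. }
  set (T' := diff T [t]).
  assert (tT' : ~ In t T') by (unfold T'; rewrite in_diff; intros [_ H]; apply H; left; auto).
  assert (EA : Ew w' T' beta = Ew w T' beta).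
  { apply Ew_ext. intros x Hx. unfold w', upd. destruct (Nat.eqb x t) eqn:E; auto.
    apply Nat.eqb_eq in E; subst; contradiction. }
  assert (Ew' : w' t = u') by (unfold w', upd; rewrite Nat.eqb_refl; auto).
  assert (SW : sw w' T = sw w T + (u' - w t)).
  { rewrite (sw_diff1 w' T t), (sw_diff1 w T t) by auto. rewrite Ew'.
    assert (sw w' T' = sw w T') by (unfold sw; f_equal; apply map_ext_in; intros x Hx; unfold w', upd;
       destruct (Nat.eqb x t) eqn:E; auto; apply Nat.eqb_eq in E; rewrite E in Hx; contradiction).
    fold T'. lra. }
  assert (0 <= sw w T) by (apply sw_nonneg; auto).
  assert (E1 := Ew_rec_W w T beta t wpos ltac:(lra) HT Ht). fold T' in E1.
  assert (E2 := Ew_rec_W w' T beta t w'pos ltac:(lra) HT Ht). fold T' in E2. rewrite Ew', EA in E2.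
  assert (CC : sumR (map (fun x => w x * Ew w (diff T [x]) beta) T') <=
               sumR (map (fun x => w' x * Ew w' (diff T [x]) beta) T')).
  { apply sumR_le. intros x Hx.
    assert (Tx : In x T) by (apply in_diff in Hx; tauto).
    assert (xt : x <> t) by (intros ->; contradiction).
    assert (w' x = w x) by (unfold w', upd; destruct (Nat.eqb x t) eqn:E; auto; apply Nat.eqb_eq in E; contradiction).
    rewrite H0. apply Rmult_le_compat_l. left; auto.
    apply IH. apply diff1_lt; auto. apply NoDup_diff; auto.
    intros y Hy; apply Hw; eapply incl_diff; eauto.
    pose proof (sw_diff_le w' T [x] w'pos HT). lra. }
  assert (GAP : (a / K) ^ length T <= Ew w T' beta - Ew w T beta).
  { apply (gap_lemma w a K beta wpos apos Hb); auto. pose proof (swle T). lra. }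
  assert (Wp : 0 < sw w' T + beta) by lra.
  assert (MAIN : (u' - w t) * (Ew w T' beta - Ew w T beta) <= (Ew w' T beta - Ew w T beta) * (sw w' T + beta)).
  { rewrite SW in *. nra. }
  assert (Kp : 0 < K) by lra.
  assert (0 <= (a/K) ^ length T) by (apply pow_le; left; apply Rdiv_lt_0_compat; lra).
  assert (STR : (u' - w t) * (a/K)^(length T) / (sw w' T + beta) <= Ew w' T beta - Ew w T beta).
  { apply (Rmult_le_reg_r (sw w' T + beta)); auto. unfold Rdiv. rewrite Rmult_assoc, Rinv_l, Rmult_1_r by lra.
    eapply Rle_trans; [|exact MAIN]. apply Rmult_le_compat_l; lra. }
  split; [|auto].
  assert (0 <= (u' - w t) * (a/K)^(length T) / (sw w' T + beta)).
  { unfold Rdiv. apply Rmult_le_pos. apply Rmult_le_pos; lra. left; apply Rinv_0_lt_compat; lra. }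
  lra.
Qed.
End Mono.

Lemma mono_multi w w' T beta a K : (forall x, 0 < w x) -> (forall x, 0 < w' x) -> 0 < a -> a <= beta ->
  NoDup T -> (forall x, In x T -> a <= w x) -> (forall x, In x T -> w x <= w' x) ->
  sw w' T + beta <= K -> Ew w T beta <= Ew w' T beta.
Proof.
  intros wpos w'pos apos Hb HT Hw Hww HK.
  set (mix := fun L x => if inb x L then w' x else w x).
  assert (mixpos : forall L x, 0 < mix L x) by (intros; unfold mix; destruct (inb x L); auto).
  assert (mixb : forall L x, In x T -> w x <= mix L x <= w' x).
  { intros; unfold mix; destruct (inb x L); split; auto; try lra. }
  assert (H : forall L, Ew w T beta <= Ew (mix L) T beta).
  { induction L as [|t L IH].
    - right. apply Ew_ext. intros x _. unfold mix; simpl. auto.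
    - destruct (in_dec Nat.eq_dec t T) as [Ht|Ht].
      + rewrite (Ew_ext (mix (t::L)) (upd (mix L) t (w' t))).
        2:{ intros x Hx. unfold mix, upd. unfold inb; simpl. destruct (Nat.eqb x t) eqn:E; simpl; auto.
            apply Nat.eqb_eq in E. rewrite E. auto. }
        eapply Rle_trans; [exact IH|].
        assert (HK' : sw (upd (mix L) t (w' t)) T + beta <= K).
        { eapply Rle_trans; [|exact HK]. apply Rplus_le_compat_r. unfold sw. apply sumR_le.
          intros x Hx. unfold upd. destruct (Nat.eqb x t) eqn:E; [apply Nat.eqb_eq in E; subst; lra|]. apply mixb; auto. }
        apply (proj1 (mono1 (mix L) a K beta (w' t) t (mixpos L) apos Hb (proj2 (mixb L t Ht)) T HT
           (fun x Hx => Rle_trans _ _ _ (Hw x Hx) (proj1 (mixb L x Hx))) HK')).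
      + rewrite (Ew_ext (mix (t::L)) (mix L)); auto.
        intros x Hx. unfold mix, inb; simpl. destruct (Nat.eqb x t) eqn:E; simpl; auto.
        apply Nat.eqb_eq in E. subst; contradiction. }
  eapply Rle_trans; [exact (H T)|]. right. apply Ew_ext. intros x Hx. unfold mix.
  assert (inb x T = true) by (apply inb_true; auto). rewrite H0; auto.
Qed.

Lemma Rabs_le_inv x y : Rabs x <= y -> -y <= x <= y.
Proof. unfold Rabs; destruct (Rcase_abs x); intros; lra. Qed.

Lemma exp_le x y : x <= y -> exp x <= exp y.
Proof. intros [H|H]. left; apply exp_increasing; auto. subst; lra. Qed.

Lemma pow_anti r n m : 0 <= r <= 1 -> (n <= m)%nat -> r ^ m <= r ^ n.
Proof.
  intros Hr Hnm. replace m with (n + (m - n))%nat by lia. rewrite pow_add.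
  rewrite <- (Rmult_1_r (r ^ n)) at 2. apply Rmult_le_compat_l. apply pow_le; lra.
  induction (m - n)%nat; simpl. lra. apply Rle_trans with (1 * 1). apply Rmult_le_compat; try lra.
  apply pow_le; lra. lra.
Qed.

Lemma sw_ub w S A : (forall x, In x S -> w x <= A) -> sw w S <= A * INR (length S).
Proof.
  induction S as [|x S IH]; intros H. unfold sw; simpl; lra.
  rewrite sw_cons. change (length (x :: S)) with (Datatypes.S (length S)). rewrite S_INR. specialize (IH (fun y Hy => H y (or_intror Hy))).
  pose proof (H x (or_introl eq_refl)). lra.
Qed.

Definition aa b := exp (-(3*b)).
Definition AA b := exp (3*b).
Definition KK b d := AA b * INR d.
Definition rho b d := aa b / KK b d.
Definition delta0 b d eps := aa b * (1 - exp (-(eps/2))) * rho b d ^ d / KK b d.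

Lemma aa_pos b : 0 < aa b. Proof. apply exp_pos. Qed.
Lemma AA_pos b : 0 < AA b. Proof. apply exp_pos. Qed.
Lemma aa_le_AA b : 0 <= b -> aa b <= AA b. Proof. intro; apply exp_le; lra. Qed.

Lemma rho_pos b d : (1 <= d)%nat -> 0 < rho b d.
Proof.
  intro Hd. unfold rho, KK. apply Rdiv_lt_0_compat. apply aa_pos.
  apply Rmult_lt_0_compat. apply AA_pos. apply lt_0_INR; lia.
Qed.
Lemma rho_le1 b d : 0 <= b -> (1 <= d)%nat -> rho b d <= 1.
Proof.
  intros Hb Hd. unfold rho, KK. pose proof (aa_le_AA b Hb). pose proof (aa_pos b). pose proof (AA_pos b).
  assert (1 <= INR d) by (apply (le_INR 1); auto).
  apply (Rmult_le_reg_r (AA b * INR d)). nra. unfold Rdiv. rewrite Rmult_assoc, Rinv_l by nra. nra.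
Qed.

Lemma delta0_pos b d eps : (1 <= d)%nat -> 0 < eps -> 0 < delta0 b d eps.
Proof.
  intros Hd He. unfold delta0. pose proof (rho_pos b d Hd). pose proof (aa_pos b).
  assert (exp (-(eps/2)) < exp 0) by (apply exp_increasing; lra). rewrite exp_0 in H1.
  apply Rdiv_lt_0_compat. apply Rmult_lt_0_compat. apply Rmult_lt_0_compat; lra. apply pow_lt; auto.
  unfold KK. apply Rmult_lt_0_compat. apply AA_pos. apply lt_0_INR; lia.
Qed.

Section Quant.
Variables (th ths : nat -> R) (b : R) (d : nat) (eps : R).
Variables (T B : list nat) (tau : R) (i j : nat).
Let Dl x := th x - ths x.
Hypothesis Hd : (1 <= d)%nat.
Hypothesis Heps : 0 < eps.
Hypothesis Hbth : forall x, (x < d)%nat -> Rabs (th x) <= b.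
Hypothesis Hbths : forall x, (x < d)%nat -> Rabs (ths x) <= b.
Hypothesis HTd : forall x, In x T -> (x < d)%nat.
Hypothesis HBd : forall x, In x B -> (x < d)%nat.
Hypothesis HTB : NoDup (T ++ B).
Hypothesis Hlen : (length T + length B <= d)%nat.
Hypothesis HiT : In i T.
Hypothesis HjB : In j B.
Hypothesis HTtau : forall x, In x T -> tau <= Dl x.
Hypothesis HBtau : forall x, In x B -> Dl x <= tau.
Hypothesis Hij : Dl i - Dl j > eps.
Hypothesis Htau : Rabs tau <= 2 * b.

Lemma quant : Ew (wt ths) T (sw (wt ths) B) + delta0 b d eps <= Ew (wt th) T (sw (wt th) B).
Proof.
  assert (Hb0 : 0 <= b) by (pose proof (Hbth i (HTd i HiT)); pose proof (Rabs_pos (th i)); lra).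
  set (a := aa b). set (A := AA b). set (K := KK b d). set (r := rho b d).
  assert (apos : 0 < a) by apply aa_pos. assert (Apos : 0 < A) by apply AA_pos.
  assert (aA : a <= A) by (apply aa_le_AA; auto).
  assert (Kpos : 0 < K) by (unfold K, KK; apply Rmult_lt_0_compat; auto; apply lt_0_INR; lia).
  assert (rdef : r = a / K) by reflexivity.
  assert (rpos : 0 < r) by (apply rho_pos; auto). assert (r1 : r <= 1) by (apply rho_le1; auto).
  set (c := exp tau).
  set (w := fun x => c * wt ths x). set (w' := wt th).
  assert (wpos : forall x, 0 < w x) by (intro; unfold w; apply Rmult_lt_0_compat; [apply exp_pos|apply wt_pos]).
  assert (w'pos : forall x, 0 < w' x) by (intro; apply wt_pos).
  assert (wexp : forall x, w x = exp (tau + ths x)) by (intro; unfold w, c, wt; rewrite exp_plus; auto).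
  assert (Hta : -(2*b) <= tau <= 2*b) by (apply Rabs_le_inv in Htau; lra).
  assert (wb : forall x, (x < d)%nat -> a <= w x <= A).
  { intros x Hx. rewrite wexp. pose proof (Hbths x Hx) as Q. apply Rabs_le_inv in Q.
    split; apply exp_le; lra. }
  assert (w'b : forall x, (x < d)%nat -> a <= w' x <= A).
  { intros x Hx. unfold w', wt. pose proof (Hbth x Hx) as Q. apply Rabs_le_inv in Q.
    split; apply exp_le; lra. }
  assert (HT : NoDup T) by (eapply NoDup_app_remove_r; eauto).
  assert (HB : NoDup B) by (eapply NoDup_app_remove_l; eauto).
  assert (E0 : Ew (wt ths) T (sw (wt ths) B) = Ew w T (sw w B)).
  { unfold w. rewrite sw_scale. symmetry. apply Ew_scale. apply exp_pos. apply wt_pos.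
    apply sw_nonneg, wt_pos. }
  rewrite E0.
  set (beta := sw w B). set (beta' := sw w' B).
  assert (TlenK : A * INR (length T) + A * INR (length B) <= K).
  { unfold K, KK. fold A. rewrite <- Rmult_plus_distr_l, <- plus_INR. apply Rmult_le_compat_l. lra.
    apply le_INR; auto. }
  assert (swT : sw w T <= A * INR (length T)) by (apply sw_ub; intros; apply wb; auto).
  assert (sw'T : sw w' T <= A * INR (length T)) by (apply sw_ub; intros; apply w'b; auto).
  assert (swB : beta <= A * INR (length B)) by (apply sw_ub; intros; apply wb; auto).
  assert (sw'B : beta' <= A * INR (length B)) by (apply sw_ub; intros; apply w'b; auto).
  assert (Hwle : forall x, In x T -> w x <= w' x).
  { intros x Hx. rewrite wexp. unfold w', wt. apply exp_le. pose proof (HTtau x Hx). unfold Dl in H. lra. }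
  assert (Hw'le : forall x, In x B -> w' x <= w x).
  { intros x Hx. rewrite wexp. unfold w', wt. apply exp_le. pose proof (HBtau x Hx). unfold Dl in H. lra. }
  assert (bb : beta' <= beta) by (unfold beta, beta', sw; apply sumR_le; auto).
  assert (bpos : a <= beta).
  { apply Rle_trans with (w j). apply wb; auto. unfold beta, sw. apply (sumR_ge_elem w); auto.
    intros; left; auto. }
  assert (b'pos : a <= beta').
  { apply Rle_trans with (w' j). apply w'b; auto. unfold beta', sw. apply (sumR_ge_elem w'); auto.
    intros; left; auto. }
  assert (rT : r ^ d <= r ^ length T) by (apply pow_anti; [lra|lia]).
  assert (rdpos : 0 < r ^ d) by (apply pow_lt; auto).
  assert (ex2 : exp (-(eps/2)) < 1) by (rewrite <- exp_0; apply exp_increasing; lra).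
  assert (exgap : 1 - exp (-(eps/2)) <= exp (eps/2) - 1).
  { assert (exp (eps/2) * exp (-(eps/2)) = 1) by (rewrite <- exp_plus; replace (eps/2 + -(eps/2)) with 0 by ring; apply exp_0).
    pose proof (exp_pos (eps/2)). pose proof (exp_pos (-(eps/2))). nra. }
  assert (d0def : delta0 b d eps = a * (1 - exp (-(eps/2))) * r ^ d / K) by reflexivity.
  assert (MM : Ew w T beta <= Ew w' T beta).
  { apply (mono_multi w w' T beta a K); auto. intros; apply wb; auto. lra. }
  destruct (Rle_dec (eps/2) (Dl i - tau)) as [C1|C1].
  -
    set (w1 := upd w i (w' i)).
    assert (w1pos : forall x, 0 < w1 x) by (intro; unfold w1, upd; destruct (Nat.eqb x i); auto).
    assert (sw1 : sw w1 T <= A * INR (length T)).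
    { apply sw_ub. intros x Hx. unfold w1, upd. destruct (Nat.eqb x i); [apply w'b|apply wb]; auto. }
    destruct (mono1 w a K beta (w' i) i wpos apos bpos (Hwle i HiT) T HT
      (fun x Hx => proj1 (wb x (HTd x Hx))) ltac:(fold w1; lra)) as [_ M1].
    specialize (M1 HiT). fold w1 in M1.
    assert (M2 : Ew w1 T beta <= Ew w' T beta).
    { apply (mono_multi w1 w' T beta a K); auto.
      - intros x Hx. unfold w1, upd. destruct (Nat.eqb x i); [apply w'b|apply wb]; auto.
      - intros x Hx. unfold w1, upd. destruct (Nat.eqb x i) eqn:E; [apply Nat.eqb_eq in E; subst; lra|auto].
      - lra. }
    assert (M3 : Ew w' T beta <= Ew w' T beta') by (apply Ew_beta_mono; auto; lra).
    assert (INC : a * (1 - exp (-(eps/2))) <= w' i - w i).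
    { rewrite wexp. unfold w', wt.
      replace (th i) with ((tau + ths i) + (Dl i - tau)) by (unfold Dl; ring). rewrite exp_plus.
      assert (exp (eps/2) <= exp (Dl i - tau)) by (apply exp_le; lra).
      assert (a <= exp (tau + ths i)) by (rewrite <- wexp; apply wb; auto).
      pose proof (exp_pos (tau + ths i)). nra. }
    assert (LB : delta0 b d eps <= (w' i - w i) * (a / K) ^ length T / (sw w1 T + beta)).
    { rewrite d0def, <- rdef. unfold Rdiv. apply Rmult_le_compat.
      - apply Rmult_le_pos; [|lra]. apply Rmult_le_pos; lra.
      - left; apply Rinv_0_lt_compat; auto.
      - apply Rmult_le_compat; try lra. apply Rmult_le_pos; lra.
      - apply Rinv_le_contravar. pose proof (sw_nonneg w1 T w1pos); lra. lra. }
    lra.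
  -
    assert (C2 : eps/2 <= tau - Dl j) by lra.
    assert (H2 : a * (1 - exp (-(eps/2))) <= w j - w' j).
    { rewrite wexp. unfold w', wt.
      replace (th j) with ((tau + ths j) + (Dl j - tau)) by (unfold Dl; ring). rewrite (exp_plus (tau + ths j) (Dl j - tau)).
      assert (exp (Dl j - tau) <= exp (-(eps/2))) by (apply exp_le; lra).
      assert (a <= exp (tau + ths j)) by (rewrite <- wexp; apply wb; auto).
      pose proof (exp_pos (Dl j - tau)). rewrite <- (Rmult_1_r (exp (tau + ths j))) at 1. rewrite <- Rmult_minus_distr_l. apply Rmult_le_compat; lra. }
    assert (Hbb : beta' <= beta - (w j - w' j)).
    { unfold beta, beta'. rewrite (sw_diff1 w B j), (sw_diff1 w' B j) by auto.
      assert (sw w' (diff B [j]) <= sw w (diff B [j])).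
      { unfold sw; apply sumR_le. intros x Hx. apply Hw'le. eapply incl_diff; eauto. }
      lra. }
    assert (Tne : T <> []) by (intro E; rewrite E in HiT; contradiction).
    assert (ST := Ew_beta_strict w' T beta' beta w'pos ltac:(lra) bb Tne).
    assert (LB1 : r ^ length T <= Ew w' T beta).
    { rewrite rdef. apply Ew_lb; auto. lra. intros; apply w'b; auto. lra. }
    set (E1 := Ew w' T beta) in *. set (E2 := Ew w' T beta') in *.
    set (S' := sw w' T) in *.
    assert (S'pos : 0 <= S') by (apply sw_nonneg; auto).
    assert (KEY : E1 * (beta - beta') <= (E2 - E1) * (S' + beta')) by nra.
    assert (D2 : 0 < S' + beta') by lra.
    assert (D2K : S' + beta' <= K) by lra.
    assert (KEY2 : r ^ d * (a * (1 - exp (-(eps/2)))) <= (E2 - E1) * K).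
    { apply Rle_trans with (E1 * (beta - beta')).
      apply Rmult_le_compat; try lra. apply Rmult_le_pos; lra.
      eapply Rle_trans; [exact KEY|]. apply Rmult_le_compat_l; [|lra].
      assert (0 <= E1 * (beta - beta')) by (apply Rmult_le_pos; lra).
      destruct (Rle_dec 0 (E2 - E1)); auto. nra. }
    assert (delta0 b d eps <= E2 - E1).
    { rewrite d0def. apply (Rmult_le_reg_r K); auto. unfold Rdiv. rewrite Rmult_assoc, Rinv_l, Rmult_1_r by lra.
      lra. }
    lra.
Qed.
End Quant.

Definition G ths th M m s := rb_user ths M m s - rb_user th M m s.
Definition V ths th M m l := sumR (map (fun s => pl_prob ths s * G ths th M m s) (perms l)).
Definition PS th l S := Ew (wt th) S (sw (wt th) (diff l S)).

Lemma PS_pos th l S : 0 < PS th l S.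
Proof. apply Ew_pos. apply wt_pos. apply sw_nonneg, wt_pos. Qed.

Lemma len_diff l k S : NoDup l -> In S (combs l k) -> length (diff l S) = (length l - k)%nat.
Proof.
  intros Hl HS. pose proof (Permutation_length (perm_of_combs _ _ _ Hl HS)).
  rewrite length_app, (combs_length _ _ _ HS) in H. lia.
Qed.

Lemma PS_sum th l k : NoDup l -> (k <= length l)%nat -> sumR (map (PS th l) (combs l k)) = 1.
Proof.
  intros Hl Hk. rewrite <- (pl_sum1 th l Hl). rewrite (sum_decomp _ l k) by auto.
  symmetry. apply sumR_map_ext. intros S HS. unfold PS, Ew.
  apply sumR_map_ext. intros t Ht.
  rewrite (sumR_map_ext _ (fun r => topw (wt th) (sw (wt th) (diff l S)) t * pl_prob th r)).
  rewrite sumR_mult_l, pl_sum1. ring. apply NoDup_diff; auto.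
  intros r Hr. rewrite pl_app. f_equal. f_equal. apply sw_perm. apply perms_in in Hr. symmetry; auto.
Qed.

Lemma Vrec ths th M ma m l : NoDup l -> (ma <= length l)%nat ->
  V ths th M (ma :: m) l =
  sumR (map (fun S => PS ths l S * ((if Nat.leb ma M then ln (PS ths l S) - ln (PS th l S) else 0)
                                     + V ths th M m (diff l S))) (combs l ma)).
Proof.
  intros Hl Hk. unfold V at 1. rewrite (sum_decomp _ l ma) by auto.
  apply sumR_map_ext. intros S HS.
  assert (NS : NoDup S) by (eapply combs_NoDup_elem; eauto).
  assert (LS : length S = ma) by (eapply combs_length; eauto).
  set (c := if Nat.leb ma M then ln (PS ths l S) - ln (PS th l S) else 0).
  transitivity (sumR (map (fun t => topw (wt ths) (sw (wt ths) (diff l S)) t *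
      (c + V ths th M m (diff l S))) (perms S))).
  - apply sumR_map_ext. intros t Ht.
    assert (Lt : length t = ma) by (apply perms_in in Ht; rewrite <- (Permutation_length Ht); auto).
    unfold V.
    rewrite (sumR_map_ext _ (fun r => topw (wt ths) (sw (wt ths) (diff l S)) t * (c * pl_prob ths r) +
        topw (wt ths) (sw (wt ths) (diff l S)) t * (pl_prob ths r * G ths th M m r))).
    + rewrite sumR_plus, sumR_mult_l, sumR_mult_l, sumR_mult_l, pl_sum1 by (apply NoDup_diff; auto). ring.
    + intros r Hr. apply perms_in in Hr as Pr.
      assert (SWr : forall th0, sw (wt th0) r = sw (wt th0) (diff l S)) by (intro; apply sw_perm; symmetry; auto).
      rewrite pl_app, SWr.
      unfold G. simpl rb_user. rewrite <- Lt, firstn_length_app, skipn_length_app. rewrite Lt.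
      assert (EC : (if Nat.leb ma M then ln (edge_prob ths t r) else 0) -
                   (if Nat.leb ma M then ln (edge_prob th t r) else 0) = c).
      { unfold c. rewrite !edge_Ew, !SWr. unfold PS.
        rewrite (Ew_perm (wt ths) S t), (Ew_perm (wt th) S t) by (auto; apply perms_in; auto).
        destruct (Nat.leb ma M); ring. }
      rewrite <- EC. ring.
  - unfold PS at 1, Ew. rewrite (Rmult_comm _ (c + _)), <- sumR_mult_l. apply sumR_map_ext; intros; ring.
Qed.

Lemma ln_le_sub1 y : 0 < y -> ln y <= y - 1.
Proof. intro Hy. pose proof (exp_ineq1_le (ln y)). rewrite exp_ln in H; auto. lra. Qed.

Lemma kl_term p q : 0 < p -> 0 < q -> p - q <= p * (ln p - ln q).
Proof.
  intros Hp Hq. pose proof (ln_le_sub1 (q / p) ltac:(apply Rdiv_lt_0_compat; auto)).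
  unfold Rdiv in H. rewrite ln_mult, ln_Rinv in H by (auto; apply Rinv_0_lt_compat; auto).
  assert (q * / p * p = q) by (field; lra). nra.
Qed.

Definition gam (dl : R) := dl - ln (1 + dl).

Lemma gam_pos dl : 0 < dl -> 0 < gam dl.
Proof.
  intro H. unfold gam. assert (ln (1 + dl) <> 0) by (apply ln_neq_0; lra).
  pose proof (exp_ineq1 _ H0). rewrite exp_ln in H1 by lra. lra.
Qed.

Lemma kl_term_q p q dl : 0 < p -> 0 < q -> 0 < dl -> p * (1 + dl) <= q -> p - q + p * gam dl <= p * (ln p - ln q).
Proof.
  intros Hp Hq Hd Hpq. set (x := q / p). set (a := 1 + dl).
  assert (xpos : 0 < x) by (apply Rdiv_lt_0_compat; auto).
  assert (apos : 1 <= a) by (unfold a; lra).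
  assert (ad : a = 1 + dl) by reflexivity.
  assert (xa : a <= x) by (unfold x, a; apply (Rmult_le_reg_r p); auto; unfold Rdiv; rewrite Rmult_assoc, Rinv_l, Rmult_1_r by lra; lra).
  assert (lnx : ln x = ln q - ln p) by (unfold x, Rdiv; rewrite ln_mult, ln_Rinv by (auto; apply Rinv_0_lt_compat; auto); ring).
  assert (L1 : ln (x / a) <= x / a - 1) by (apply ln_le_sub1; apply Rdiv_lt_0_compat; lra).
  unfold Rdiv in L1. rewrite ln_mult, ln_Rinv in L1 by (try apply Rinv_0_lt_compat; lra).
  assert (L2 : x * / a - 1 <= x - a).
  { assert (x * / a - 1 = (x - a) / a) by (field; lra). rewrite H. apply (Rmult_le_reg_r a); [lra|].
    unfold Rdiv; rewrite Rmult_assoc, Rinv_l, Rmult_1_r by lra. nra. }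
  assert (ln x <= x - 1 - gam dl) by (unfold gam; fold a; lra).
  assert (p * x = q) by (unfold x; field; lra).
  rewrite lnx in H. nra.
Qed.

Lemma kl_nonneg (L : list (list nat)) (p q : list nat -> R) :
  (forall S, In S L -> 0 < p S /\ 0 < q S) -> sumR (map p L) = 1 -> sumR (map q L) = 1 ->
  0 <= sumR (map (fun S => p S * (ln (p S) - ln (q S))) L).
Proof.
  intros H Hp Hq. apply Rle_trans with (sumR (map (fun S => p S - q S) L)).
  rewrite sumR_minus; lra. apply sumR_le. intros S HS. destruct (H S HS). apply kl_term; auto.
Qed.

Lemma kl_quant (L : list (list nat)) (p q : list nat -> R) S0 dl :
  (forall S, In S L -> 0 < p S /\ 0 < q S) -> sumR (map p L) = 1 -> sumR (map q L) = 1 ->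
  In S0 L -> 0 < dl -> p S0 * (1 + dl) <= q S0 ->
  p S0 * gam dl <= sumR (map (fun S => p S * (ln (p S) - ln (q S))) L).
Proof.
  intros H Hp Hq HS0 Hd Hpq.
  assert (sumR (map (fun S => p S - q S) L) + p S0 * gam dl <= sumR (map (fun S => p S * (ln (p S) - ln (q S))) L)).
  { apply (sumR_ge_elem_extra _ (fun S => p S - q S) L S0); auto.
    intros S HS. destruct (H S HS). apply kl_term; auto.
    destruct (H S0 HS0). apply kl_term_q; auto. }
  rewrite sumR_minus in H0. lra.
Qed.

Lemma Vnonneg ths th M : forall m l, NoDup l -> (list_sum m <= length l)%nat -> 0 <= V ths th M m l.
Proof.
  induction m as [|ma m IH]; intros l Hl Hs.
  - unfold V, G. simpl. apply sumR_nonneg. intros. lra.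
  - simpl in Hs. rewrite Vrec by (auto; lia).
    rewrite (sumR_map_ext _ (fun S => PS ths l S * (if Nat.leb ma M then ln (PS ths l S) - ln (PS th l S) else 0)
       + PS ths l S * V ths th M m (diff l S))) by (intros; ring).
    rewrite sumR_plus. apply Rplus_le_le_0_compat.
    + destruct (Nat.leb ma M).
      * apply kl_nonneg. intros; split; apply PS_pos. apply PS_sum; auto; lia. apply PS_sum; auto; lia.
      * apply sumR_nonneg. intros; lra.
    + apply sumR_nonneg. intros S HS. apply Rmult_le_pos. left; apply PS_pos.
      apply IH. apply NoDup_diff; auto. rewrite (len_diff l ma) by auto. lia.
Qed.

Fixpoint fk M m := match m with [] => 0%nat | a :: m' => if Nat.leb a M then a else fk M m' end.
Fixpoint pk M m := match m with [] => 0%nat | a :: m' => if Nat.leb a M then 0%nat else (a + pk M m')%nat end.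

Lemma NoDup_app_disj {A} (l1 l2 : list A) x : NoDup (l1 ++ l2) -> In x l1 -> In x l2 -> False.
Proof.
  induction l1 as [|y l1 IH]; simpl; intros H H1 H2; auto.
  inversion H as [|? ? Hy Hr]; subst. destruct H1 as [->|H1]; eauto. apply Hy. apply in_or_app; auto.
Qed.

Lemma wt_bounds th b x : Rabs (th x) <= b -> aa b <= wt th x <= AA b.
Proof.
  intro H. apply Rabs_le_inv in H. unfold wt, aa, AA. pose proof (Rabs_pos (th x)).
  split; apply exp_le; lra.
Qed.

Lemma PS_lb ths b d l k S : (1 <= d)%nat -> 0 <= b -> NoDup l -> (forall x, In x l -> (x < d)%nat) -> (length l <= d)%nat ->
  (forall x, (x < d)%nat -> Rabs (ths x) <= b) -> In S (combs l k) -> rho b d ^ d <= PS ths l S.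
Proof.
  intros Hd Hb Hl Hld Hlen Hths HS. unfold PS.
  apply Rle_trans with (rho b d ^ length S).
  - apply pow_anti. split. left; apply rho_pos; auto. apply rho_le1; auto.
    pose proof (NoDup_incl_length (combs_NoDup_elem _ _ _ HS Hl) (combs_incl _ _ _ HS)). lia.
  - unfold rho. apply Ew_lb. apply wt_pos. apply sw_nonneg, wt_pos. apply aa_pos.
    intros x Hx. apply wt_bounds. apply Hths, Hld. eapply combs_incl; eauto.
    rewrite <- sw_app, <- (sw_perm _ _ _ (perm_of_combs _ _ _ Hl HS)).
    eapply Rle_trans. apply sw_ub. intros x Hx. apply (wt_bounds ths b x (Hths x (Hld x Hx))).
    unfold KK. apply Rmult_le_compat_l. left; apply AA_pos. apply le_INR; auto.
Qed.

Section VQ.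
Variables (ths th : nat -> R) (b : R) (d M : nat) (dl : R).
Hypothesis Hd : (1 <= d)%nat.
Hypothesis Hb : 0 <= b.
Hypothesis Hdl : 0 < dl.
Hypothesis Hths : forall x, (x < d)%nat -> Rabs (ths x) <= b.

Lemma Vq : forall m l T B, (exists a, In a m /\ (a <= M)%nat) -> NoDup l -> (forall x, In x l -> (x < d)%nat) ->
  (length l <= d)%nat -> (list_sum m <= length l)%nat -> NoDup (T ++ B) -> incl (T ++ B) l ->
  length T = fk M m -> (length T + length B + pk M m = length l)%nat ->
  Ew (wt ths) T (sw (wt ths) B) + dl <= Ew (wt th) T (sw (wt th) B) ->
  (rho b d ^ d) ^ length m * (rho b d ^ d * gam dl) <= V ths th M m l.
Proof.
  assert (r0 : 0 < rho b d ^ d) by (apply pow_lt, rho_pos; auto).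
  assert (r1 : rho b d ^ d <= 1).
  { rewrite <- (pow1 d). apply pow_incr. split. left; apply rho_pos; auto. apply rho_le1; auto. }
  assert (g0 := gam_pos dl Hdl).
  induction m as [|ma m IH]; intros l T B [a [Ha HaM]] Hl Hld Hlen Hs HTB HTBl HT HL HQ; [contradiction|].
  simpl in Hs. rewrite Vrec by (auto; lia).
  set (c := fun S => if Nat.leb ma M then ln (PS ths l S) - ln (PS th l S) else 0).
  assert (Vn : forall S, In S (combs l ma) -> 0 <= V ths th M m (diff l S)).
  { intros S HS. apply Vnonneg. apply NoDup_diff; auto. rewrite (len_diff l ma) by auto. lia. }
  simpl in HT, HL. destruct (Nat.leb ma M) eqn:Ek.
  -
    assert (PTB : Permutation (T ++ B) l) by (apply NoDup_Permutation_bis; auto; rewrite length_app; lia).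
    set (S0 := filter (fun y => inb y T) l).
    assert (NT : NoDup T) by (eapply NoDup_app_remove_r; eauto).
    assert (PS0 : Permutation S0 T).
    { apply NoDup_Permutation. apply NoDup_filter; auto. auto. intro x. unfold S0. rewrite filter_In, inb_true.
      split; [tauto|]. intro; split; auto. apply HTBl. apply in_or_app; auto. }
    assert (HS0 : In S0 (combs l ma)).
    { rewrite <- HT, <- (Permutation_length PS0). apply filter_in_combs. }
    assert (PB : Permutation (diff l S0) B).
    { apply NoDup_Permutation. apply NoDup_diff; auto. eapply NoDup_app_remove_l; eauto.
      intro x. rewrite in_diff. split.
      - intros [X1 X2]. apply (Permutation_in _ (Permutation_sym PTB)) in X1. apply in_app_or in X1 as [X1|X1]; auto.
        exfalso; apply X2. apply (Permutation_in _ (Permutation_sym PS0)); auto.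
      - intros XB. split. apply HTBl. apply in_or_app; auto.
        intro XS. apply (Permutation_in _ PS0) in XS. exact (NoDup_app_disj _ _ _ HTB XS XB). }
    assert (EQ : forall th0, PS th0 l S0 = Ew (wt th0) T (sw (wt th0) B)).
    { intro th0. unfold PS. rewrite (sw_perm _ _ _ PB). apply Ew_perm; auto. apply NoDup_filter; auto. }
    assert (Ple : PS ths l S0 <= 1) by (rewrite EQ; apply Ew_le1; auto; [apply wt_pos|apply sw_nonneg, wt_pos]).
    assert (PSlb : rho b d ^ d <= PS ths l S0) by (eapply PS_lb; eauto).
    assert (KL : PS ths l S0 * gam dl <= sumR (map (fun S => PS ths l S * (ln (PS ths l S) - ln (PS th l S))) (combs l ma))).
    { apply kl_quant; auto. intros; split; apply PS_pos. apply PS_sum; auto; lia. apply PS_sum; auto; lia.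
      rewrite !EQ. rewrite !EQ in Ple. nra. }
    assert (SPL : sumR (map (fun S => PS ths l S * (ln (PS ths l S) - ln (PS th l S))) (combs l ma)) <=
       sumR (map (fun S => PS ths l S * ((if true then ln (PS ths l S) - ln (PS th l S) else 0) + V ths th M m (diff l S))) (combs l ma))).
    { apply sumR_le. intros S HS. pose proof (Vn S HS). pose proof (PS_pos ths l S). simpl. nra. }
    eapply Rle_trans; [|exact SPL]. eapply Rle_trans; [|exact KL].
    assert (0 <= (rho b d ^ d) ^ length (ma :: m) <= 1).
    { split. apply pow_le; lra. rewrite <- (pow1 (length (ma::m))). apply pow_incr. lra. }
    assert (0 < gam dl) by auto.
    apply Rle_trans with (1 * (rho b d ^ d * gam dl)).
    apply Rmult_le_compat_r. left; apply Rmult_lt_0_compat; auto. lra.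
    rewrite Rmult_1_l. apply Rmult_le_compat_r; lra.
  -
    set (U := filter (fun y => negb (inb y (T ++ B))) l).
    assert (PU : Permutation l (filter (fun y => inb y (T ++ B)) l ++ U)) by apply perm_filter_split.
    assert (PTB : Permutation (filter (fun y => inb y (T ++ B)) l) (T ++ B)).
    { apply NoDup_Permutation; auto. apply NoDup_filter; auto. intro x. rewrite filter_In, inb_true.
      split; [tauto|]. intro; split; auto. }
    assert (LU : length l = (length T + length B + length U)%nat).
    { rewrite (Permutation_length PU), length_app, (Permutation_length PTB), length_app. lia. }
    assert (NU : NoDup U) by (apply NoDup_filter; auto).
    set (S1 := firstn ma U).
    assert (LS1 : length S1 = ma) by (unfold S1; rewrite length_firstn; lia).
    assert (NS1 : NoDup S1).
    { unfold S1. rewrite <- (firstn_skipn ma U) in NU. eapply NoDup_app_remove_r; eauto. }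
    assert (S1U : forall x, In x S1 -> In x U).
    { intros x Hx. rewrite <- (firstn_skipn ma U). apply in_or_app; auto. }
    set (S0 := filter (fun y => inb y S1) l).
    assert (PS01 : Permutation S0 S1).
    { apply NoDup_Permutation. apply NoDup_filter; auto. auto. intro x. unfold S0. rewrite filter_In, inb_true.
      split; [tauto|]. intro X; split; auto. apply S1U in X. unfold U in X. apply filter_In in X; tauto. }
    assert (HS0 : In S0 (combs l ma)).
    { rewrite <- LS1, <- (Permutation_length PS01). apply filter_in_combs. }
    assert (INC : incl (T ++ B) (diff l S0)).
    { intros x Hx. apply in_diff. split; auto. intro X. apply (Permutation_in _ PS01) in X.
      apply S1U in X. unfold U in X. apply filter_In in X as [_ X].
      assert (inb x (T ++ B) = true) by (apply inb_true; auto). rewrite H in X. discriminate. }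
    assert (Ld : length (diff l S0) = (length l - ma)%nat) by (apply (len_diff l ma); auto).
    assert (IHa := IH (diff l S0) T B).
    assert (HIH : (rho b d ^ d) ^ length m * (rho b d ^ d * gam dl) <= V ths th M m (diff l S0)).
    { apply IHa; auto.
      - apply in_inv in Ha as [<-|Ha]. apply Nat.leb_le in HaM. congruence. eauto.
      - apply NoDup_diff; auto.
      - intros x Hx. apply Hld. eapply incl_diff; eauto.
      - lia.
      - lia.
      - lia. }
    assert (PSlb : rho b d ^ d <= PS ths l S0) by (eapply PS_lb; eauto).
    eapply Rle_trans; [|apply (sumR_ge_elem _ _ S0)]; auto.
    + simpl length. simpl pow. rewrite Rmult_assoc. simpl. rewrite Rplus_0_l.
      apply Rmult_le_compat; auto. left; auto.
      apply Rmult_le_pos. apply pow_le; lra. left; apply Rmult_lt_0_compat; auto.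
    + intros S HS. simpl. rewrite Rplus_0_l. apply Rmult_le_pos. left; apply PS_pos. auto.
Qed.
End VQ.

Fixpoint ins (f : nat -> R) x l := match l with
  | [] => [x] | y :: l' => if Rle_dec (f y) (f x) then x :: l else y :: ins f x l' end.
Fixpoint isort f l := match l with [] => [] | x :: l' => ins f x (isort f l') end.

Lemma ins_perm f x l : Permutation (ins f x l) (x :: l).
Proof.
  induction l as [|y l IH]; simpl; auto. destruct (Rle_dec (f y) (f x)); auto.
  eapply Permutation_trans. constructor. exact IH. constructor.
Qed.

Lemma isort_perm f l : Permutation (isort f l) l.
Proof.
  induction l as [|x l IH]; simpl; auto. eapply Permutation_trans. apply ins_perm. constructor; auto.
Qed.

Lemma ins_sorted f x l : StronglySorted (fun a b => f b <= f a) l ->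
  StronglySorted (fun a b => f b <= f a) (ins f x l).
Proof.
  induction l as [|y l IH]; simpl; intro H. constructor; auto.
  inversion H as [|? ? H1 H2]; subst.
  destruct (Rle_dec (f y) (f x)) as [E|E].
  - constructor; auto. constructor; auto. rewrite Forall_forall in *. intros z Hz. specialize (H2 z Hz). lra.
  - constructor; auto. rewrite Forall_forall in *. intros z Hz.
    apply (Permutation_in _ (ins_perm f x l)) in Hz. destruct Hz as [<-|Hz]. lra. auto.
Qed.

Lemma isort_sorted f l : StronglySorted (fun a b => f b <= f a) (isort f l).
Proof. induction l; simpl. constructor. apply ins_sorted; auto. Qed.

Lemma ss_split {A} (R : A -> A -> Prop) l1 l2 x y : StronglySorted R (l1 ++ l2) -> In x l1 -> In y l2 -> R x y.
Proof.
  induction l1 as [|a l1 IH]; simpl; intros H Hx Hy. contradiction.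
  inversion H as [|? ? H1 H2]; subst. destruct Hx as [->|Hx]; auto.
  rewrite Forall_forall in H2. apply H2. apply in_or_app; auto.
Qed.

Lemma ex_min (f : nat -> R) l : l <> [] -> exists x0, In x0 l /\ forall x, In x l -> f x0 <= f x.
Proof.
  induction l as [|y l IH]; intro H. congruence.
  destruct (list_eq_dec Nat.eq_dec l []) as [->|Hne].
  - exists y. split. left; auto. intros x [->|[]]; lra.
  - destruct (IH Hne) as [x0 [H1 H2]]. destruct (Rle_dec (f y) (f x0)).
    + exists y. split. left; auto. intros x [->|Hx]. lra. specialize (H2 x Hx); lra.
    + exists x0. split. right; auto. intros x [->|Hx]. lra. auto.
Qed.

Lemma ex_max (f : nat -> R) l : l <> [] -> exists x0, In x0 l /\ forall x, In x l -> f x <= f x0.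
Proof.
  intro H. destruct (ex_min (fun x => - f x) l H) as [x0 [H1 H2]]. exists x0. split; auto.
  intros x Hx. specialize (H2 x Hx). lra.
Qed.

Lemma fk_in M m : (exists a, In a m /\ (a <= M)%nat) -> In (fk M m) m /\ (pk M m + fk M m <= list_sum m)%nat.
Proof.
  induction m as [|a m IH]; intros [c [Hc HcM]]. contradiction.
  simpl. destruct (Nat.leb a M) eqn:E.
  - split. left; auto. lia.
  - destruct Hc as [->|Hc]. apply Nat.leb_nle in E. lia.
    destruct IH as [H1 H2]. eauto. split. right; auto. lia.
Qed.

Lemma NoDup_app_mid {A} (a b c : list A) : NoDup (a ++ b ++ c) -> NoDup (a ++ c).
Proof.
  intro H. apply (Permutation_NoDup (Permutation_app_swap_app a b c)) in H.
  eapply NoDup_app_remove_l; eauto.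
Qed.

Lemma sumR_pos_list {A} (f : A -> R) l : l <> [] -> (forall x, In x l -> 0 < f x) -> 0 < sumR (map f l).
Proof.
  destruct l as [|y l]. congruence. intros _ H. simpl.
  pose proof (H y (or_introl eq_refl)). assert (0 <= sumR (map f l)) by (apply sumR_nonneg; intros; left; apply H; right; auto).
  lra.
Qed.

Definition gtot b d eps (m : list nat) :=
  (rho b d ^ d) ^ length m * (rho b d ^ d * gam (delta0 b d eps)).

Lemma gtot_pos b d eps m : (1 <= d)%nat -> 0 < eps -> 0 < gtot b d eps m.
Proof.
  intros Hd He. unfold gtot. assert (0 < rho b d ^ d) by (apply pow_lt, rho_pos; auto).
  apply Rmult_lt_0_compat. apply pow_lt; auto. apply Rmult_lt_0_compat; auto.
  apply gam_pos, delta0_pos; auto.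
Qed.

Lemma Vfar d b m ths th M eps :
  m <> [] -> (forall a, In a m -> (1 <= a)%nat) -> (list_sum m < d)%nat ->
  Omega d b ths -> Omega d b th -> (exists a, In a m /\ (a <= M)%nat) -> 0 < eps ->
  (exists i, (i < d)%nat /\ Rabs (th i - ths i) > eps) ->
  gtot b d eps m <= V ths th M m (seq 0 d).
Proof.
  intros Hne Hm1 Hsum [Sths Bths] [Sth Bth] Hkept Heps [x [Hx Hfar]].
  assert (Hd : (1 <= d)%nat) by lia.
  assert (Hb : 0 <= b) by (pose proof (Bth 0%nat ltac:(lia)); pose proof (Rabs_pos (th 0%nat)); lra).
  set (Dl := fun x => th x - ths x).
  set (S := isort Dl (seq 0 d)).
  assert (PS_ : Permutation S (seq 0 d)) by apply isort_perm.
  assert (SS : StronglySorted (fun a b => Dl b <= Dl a) S) by apply isort_sorted.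
  assert (NS : NoDup S) by (eapply Permutation_NoDup; [symmetry; eauto|apply seq_NoDup]).
  assert (LSd : length S = d) by (rewrite (Permutation_length PS_), length_seq; auto).
  assert (inS : forall y, In y S <-> (y < d)%nat).
  { intro y. split; intro H. apply (Permutation_in _ PS_) in H. apply in_seq in H. lia.
    apply (Permutation_in _ (Permutation_sym PS_)). apply in_seq. lia. }
  destruct (fk_in M m Hkept) as [Hk Hsk].
  set (k := fk M m). set (s := pk M m). fold k s in Hk, Hsk.
  assert (k1 : (1 <= k)%nat) by auto.
  set (T := firstn k S). set (B := skipn (s + k) S).
  assert (LT : length T = k) by (unfold T; rewrite length_firstn; lia).
  assert (LB : length B = (d - (s + k))%nat) by (unfold B; rewrite length_skipn; lia).
  assert (SplitT : S = T ++ skipn k S) by (symmetry; apply firstn_skipn).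
  assert (SplitB : S = firstn (s + k) S ++ B) by (symmetry; apply firstn_skipn).
  assert (Bsub : forall y, In y B -> In y (skipn k S)).
  { intros y Hy. unfold B in Hy. rewrite <- skipn_skipn in Hy. rewrite <- (firstn_skipn s (skipn k S)). apply in_or_app; auto. }
  assert (NTB : NoDup (T ++ B)).
  { rewrite SplitT in NS. rewrite <- (firstn_skipn s (skipn k S)) in NS. rewrite skipn_skipn in NS.
    eapply NoDup_app_mid; eauto. }
  assert (Tne : T <> []) by (intro E; rewrite E in LT; simpl in LT; lia).
  assert (Bne : B <> []) by (intro E; rewrite E in LB; simpl in LB; lia).
  destruct (ex_max Dl T Tne) as [i [Hi Hmax]].
  destruct (ex_min Dl T Tne) as [x0 [Hx0 Hmin]].
  destruct (ex_min Dl B Bne) as [j [Hj HminB]].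
  assert (Tin : forall y, In y T -> In y S) by (intros y Hy; rewrite SplitT; apply in_or_app; auto).
  assert (Bin : forall y, In y B -> In y S) by (intros y Hy; rewrite SplitB; apply in_or_app; auto).
  assert (Gmax : forall y, (y < d)%nat -> Dl y <= Dl i).
  { intros y Hy. apply inS in Hy. rewrite SplitT in Hy. apply in_app_or in Hy as [Hy|Hy]; auto.
    rewrite SplitT in SS. exact (ss_split _ _ _ i y SS Hi Hy). }
  assert (Gmin : forall y, (y < d)%nat -> Dl j <= Dl y).
  { intros y Hy. apply inS in Hy. rewrite SplitB in Hy. apply in_app_or in Hy as [Hy|Hy]; auto.
    rewrite SplitB in SS. exact (ss_split _ _ _ y j SS Hy Hj). }
  assert (Btau : forall y, In y B -> Dl y <= Dl x0).
  { intros y Hy. rewrite SplitT in SS. exact (ss_split _ _ _ x0 y SS Hx0 (Bsub y Hy)). }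
  assert (SumD : sumR (map Dl (seq 0 d)) = 0).
  { unfold Dl. rewrite sumR_minus. lra. }
  assert (seqne : seq 0 d <> []) by (destruct d; [lia|simpl; congruence]).
  assert (jneg : Dl j <= 0).
  { destruct (Rle_dec (Dl j) 0); auto. exfalso.
    assert (0 < sumR (map Dl (seq 0 d))); [|lra].
    apply sumR_pos_list; auto. intros y Hy. apply in_seq in Hy. pose proof (Gmin y ltac:(lia)). lra. }
  assert (ipos : 0 <= Dl i).
  { destruct (Rle_dec 0 (Dl i)); auto. exfalso.
    assert (sumR (map Dl (seq 0 d)) < 0); [|lra].
    assert (0 < sumR (map (fun y => - Dl y) (seq 0 d))).
    { apply sumR_pos_list; auto. intros y Hy. apply in_seq in Hy. pose proof (Gmax y ltac:(lia)). lra. }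
    rewrite (sumR_map_ext _ (fun y => -1 * Dl y)) in H by (intros; ring).
    rewrite (sumR_mult_l (-1) Dl) in H. lra. }
  assert (Hij : Dl i - Dl j > eps).
  { pose proof (Gmax x Hx). pose proof (Gmin x Hx). unfold Rabs in Hfar. fold (Dl x) in Hfar.
    destruct (Rcase_abs (Dl x)); lra. }
  assert (Htau : Rabs (Dl x0) <= 2 * b).
  { assert (x0d : (x0 < d)%nat) by (apply inS; auto).
    pose proof (Bth x0 x0d). pose proof (Bths x0 x0d). apply Rabs_le_inv in H. apply Rabs_le_inv in H0.
    apply Rabs_le. unfold Dl. lra. }
  assert (Q := quant th ths b d eps T B (Dl x0) i j Hd Heps Bth Bths
     (fun y Hy => proj1 (inS y) (Tin y Hy)) (fun y Hy => proj1 (inS y) (Bin y Hy)) NTB ltac:(lia) Hi Hj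
     Hmin Btau Hij Htau).
  unfold gtot. eapply (Vq ths th b d M (delta0 b d eps) Hd Hb (delta0_pos b d eps Hd Heps) Bths m (seq 0 d) T B); auto.
  - apply seq_NoDup.
  - intros y Hy. apply in_seq in Hy. lia.
  - rewrite length_seq; lia.
  - rewrite length_seq; lia.
  - intros y Hy. apply in_seq. apply in_app_or in Hy as [Hy|Hy].
    pose proof (proj1 (inS y) (Tin y Hy)); lia. pose proof (proj1 (inS y) (Bin y Hy)); lia.
  - rewrite length_seq. lia.
Qed.

Definition Sig d := rankings d.
Definition ldec := list_eq_dec Nat.eq_dec.
Definition cnt (sg : list nat) (s : list (list nat)) : R := INR (count_occ ldec s sg).
Definition ind (r sg : list nat) : R := if ldec r sg then 1 else 0.

Lemma cnt_cons sg r s : cnt sg (r :: s) = ind r sg + cnt sg s.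
Proof.
  unfold cnt, ind. destruct (ldec r sg) as [E|E].
  - rewrite count_occ_cons_eq by auto. rewrite S_INR. ring.
  - rewrite count_occ_cons_neq by auto. ring.
Qed.

Lemma cnt_nil sg : cnt sg [] = 0.
Proof. reflexivity. Qed.

Lemma sum_ind (f : list nat -> R) L sg : NoDup L -> In sg L ->
  sumR (map (fun r => ind r sg * f r) L) = f sg.
Proof.
  induction L as [|x L IH]; simpl; intros H Hs. contradiction.
  inversion H as [|? ? H1 H2]; subst. unfold ind at 1. destruct (ldec x sg) as [E|E].
  - subst. rewrite (sumR_map_ext _ (fun _ => 0)).
    + assert (sumR (map (fun _ : list nat => 0) L) = 0) by (clear; induction L; simpl; auto; lra). lra.
    + intros r Hr. unfold ind. destruct (ldec r sg); [subst; contradiction|ring].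
  - destruct Hs as [->|Hs]. congruence. rewrite IH; auto. ring.
Qed.

Lemma sumR_swap {A B} (F : A -> B -> R) La Lb :
  sumR (map (fun a => sumR (map (fun b => F a b) Lb)) La) = sumR (map (fun b => sumR (map (fun a => F a b) La)) Lb).
Proof.
  induction La as [|a La IH]; simpl.
  - clear. induction Lb; simpl; auto. lra.
  - rewrite IH. rewrite <- sumR_plus. auto.
Qed.

Lemma L_RB_cnt th M m d s : (forall r, In r s -> In r (Sig d)) ->
  L_RB th M m s = sumR (map (fun sg => cnt sg s * rb_user th M m sg) (Sig d)).
Proof.
  assert (ND : NoDup (Sig d)) by (apply NoDup_perms, seq_NoDup).
  induction s as [|r s IH]; intros H; unfold L_RB in *.
  - simpl. rewrite (sumR_map_ext _ (fun _ => 0)) by (intros; rewrite cnt_nil; ring). clear; induction (Sig d); simpl; auto; lra.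
  - change (sumR (map (rb_user th M m) (r :: s))) with (rb_user th M m r + sumR (map (rb_user th M m) s)).
    rewrite IH by (intros; apply H; right; auto).
    rewrite (sumR_map_ext (fun sg => cnt sg (r :: s) * rb_user th M m sg) (fun sg => ind sg r * rb_user th M m sg + cnt sg s * rb_user th M m sg)).
    2:{ intros sg _. rewrite cnt_cons. unfold ind. destruct (ldec r sg), (ldec sg r); subst; try congruence; ring. }
    rewrite sumR_plus. rewrite (sum_ind (rb_user th M m)); auto. apply H; left; auto.
Qed.

Lemma samples_in d n s : In s (samples d n) -> forall r, In r s -> In r (Sig d).
Proof.
  revert s; induction n as [|n IH]; simpl; intros s Hs r Hr.
  - destruct Hs as [<-|[]]. contradiction.
  - apply in_flat_map in Hs as [s' [Hs' Hs]]. apply in_map_iff in Hs as [r' [<- Hr']].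
    destruct Hr as [<-|Hr]; eauto.
Qed.

Lemma pl_pos th s : 0 < pl_prob th s.
Proof.
  induction s as [|x s IH]. simpl; lra. rewrite pl_cons. apply Rmult_lt_0_compat; auto.
  apply Rdiv_lt_0_compat. apply wt_pos. unfold sumw. change (sumR (map (wt th) (x :: s))) with (sw (wt th) (x::s)).
  apply sw_pos_cons, wt_pos.
Qed.

Definition Pr th (s : list (list nat)) := prodR (map (pl_prob th) s).
Lemma Pr_nonneg th s : 0 <= Pr th s.
Proof. induction s; unfold Pr in *; simpl. lra. apply Rmult_le_pos; auto. left; apply pl_pos. Qed.

Lemma E_step th d n (f : list (list nat) -> R) :
  sumR (map (fun s => Pr th s * f s) (samples d (S n))) =
  sumR (map (fun s => Pr th s * sumR (map (fun r => pl_prob th r * f (r :: s)) (Sig d))) (samples d n)).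
Proof.
  simpl. rewrite sumR_flat_map. apply sumR_map_ext. intros s _. rewrite map_map.
  rewrite <- sumR_mult_l. apply sumR_map_ext. intros r _. unfold Pr; simpl. ring.
Qed.

Lemma sig_sum1 th d : sumR (map (pl_prob th) (Sig d)) = 1.
Proof. apply pl_sum1, seq_NoDup. Qed.

Lemma E_one th d n : sumR (map (fun s => Pr th s * 1) (samples d n)) = 1.
Proof.
  induction n as [|n IH]. simpl. unfold Pr; simpl. ring.
  rewrite E_step. rewrite (sumR_map_ext _ (fun s => Pr th s * 1)). exact IH.
  intros s _. f_equal. rewrite (sumR_map_ext _ (pl_prob th)) by (intros; ring). apply sig_sum1.
Qed.

Lemma E_le th d n (f g : list (list nat) -> R) : (forall s, f s <= g s) ->
  sumR (map (fun s => Pr th s * f s) (samples d n)) <= sumR (map (fun s => Pr th s * g s) (samples d n)).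
Proof. intro H. apply sumR_le. intros. apply Rmult_le_compat_l. apply Pr_nonneg. auto. Qed.

Lemma var_bound th d sg : In sg (Sig d) -> forall n,
  sumR (map (fun s => Pr th s * (cnt sg s - INR n * pl_prob th sg) ^ 2) (samples d n)) <= INR n.
Proof.
  intros Hsg. assert (ND : NoDup (Sig d)) by (apply NoDup_perms, seq_NoDup).
  set (p := pl_prob th sg).
  induction n as [|n IH].
  - simpl. unfold Pr, cnt; simpl. lra.
  - rewrite E_step.
    eapply Rle_trans. apply (E_le th d n _ (fun s => (cnt sg s - INR n * p) ^ 2 + 1)).
    + intros s. set (D := cnt sg s - INR n * p).
      rewrite (sumR_map_ext _ (fun r => pl_prob th r * D ^ 2 + 2 * D * (ind r sg * pl_prob th r)
           + ind r sg * ((1 - 2 * p) * pl_prob th r) + (p ^ 2 - 2 * D * p) * pl_prob th r)).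
      * rewrite !sumR_plus, !sumR_mult_l.
        rewrite (sumR_map_ext (fun r => pl_prob th r * D ^ 2) (fun r => D ^ 2 * pl_prob th r)) by (intros; ring).
        rewrite sumR_mult_l, sig_sum1.
        rewrite (sum_ind (pl_prob th)), (sum_ind (fun r => (1 - 2 * p) * pl_prob th r)) by auto.
        fold p. assert (p - p ^ 2 <= 1) by nra. nra.
      * intros r _. rewrite cnt_cons, S_INR. unfold D.
        unfold ind. destruct (ldec r sg) as [E|E]; [subst r; fold p|]; ring.
    + rewrite (sumR_map_ext _ (fun s => Pr th s * (cnt sg s - INR n * p) ^ 2 + Pr th s * 1)) by (intros; ring).
      rewrite sumR_plus, E_one, S_INR. fold p in IH. lra.
Qed.

Lemma ln_le x y : 0 < x -> x <= y -> ln x <= ln y.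
Proof. intros Hx [H|H]. left; apply ln_increasing; auto. subst; lra. Qed.

Definition Lc b d := - ln (rho b d ^ d).

Lemma edge_bounds th b d T B : (1 <= d)%nat -> 0 <= b -> (forall x, (x < d)%nat -> Rabs (th x) <= b) ->
  NoDup (T ++ B) -> (forall x, In x (T ++ B) -> (x < d)%nat) ->
  rho b d ^ d <= edge_prob th T B <= 1.
Proof.
  intros Hd Hb Hth HTB Hx. rewrite edge_Ew. split.
  - assert (LTB : (length (T ++ B) <= d)%nat).
    { rewrite <- (length_seq d 0). apply NoDup_incl_length; auto. intros y Hy. apply in_seq. specialize (Hx y Hy). lia. }
    apply Rle_trans with (rho b d ^ length T).
    + apply pow_anti. split. left; apply rho_pos; auto. apply rho_le1; auto. rewrite length_app in LTB; lia.
    + unfold rho. apply Ew_lb. apply wt_pos. apply sw_nonneg, wt_pos. apply aa_pos.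
      intros y Hy. apply wt_bounds. apply Hth, Hx. apply in_or_app; auto.
      rewrite <- sw_app. eapply Rle_trans. apply sw_ub. intros y Hy. apply (wt_bounds th b y (Hth y (Hx y Hy))).
      unfold KK. apply Rmult_le_compat_l. left; apply AA_pos. apply le_INR; auto.
  - apply Ew_le1. apply wt_pos. apply sw_nonneg, wt_pos. eapply NoDup_app_remove_r; eauto.
Qed.

Lemma Lc_nonneg b d : (1 <= d)%nat -> 0 <= b -> 0 <= Lc b d.
Proof.
  intros Hd Hb. unfold Lc. assert (0 < rho b d ^ d) by (apply pow_lt, rho_pos; auto).
  assert (rho b d ^ d <= 1) by (rewrite <- (pow1 d); apply pow_incr; split; [left; apply rho_pos; auto|apply rho_le1; auto]).
  pose proof (ln_le _ _ H H0). rewrite ln_1 in H1. lra.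
Qed.

Lemma rb_bound th b d M : (1 <= d)%nat -> 0 <= b -> (forall x, (x < d)%nat -> Rabs (th x) <= b) ->
  forall m s, NoDup s -> (forall x, In x s -> (x < d)%nat) -> Rabs (rb_user th M m s) <= INR (length m) * Lc b d.
Proof.
  intros Hd Hb Hth. induction m as [|ma m IH]; intros s Hs Hx.
  - simpl. rewrite Rabs_R0. lra.
  - change (rb_user th M (ma :: m) s) with ((if Nat.leb ma M then ln (edge_prob th (firstn ma s) (skipn ma s)) else 0)
        + rb_user th M m (skipn ma s)).
    assert (NS : NoDup (firstn ma s ++ skipn ma s)) by (rewrite firstn_skipn; auto).
    assert (XS : forall x, In x (firstn ma s ++ skipn ma s) -> (x < d)%nat) by (rewrite firstn_skipn; auto).
    assert (E1 : Rabs (if Nat.leb ma M then ln (edge_prob th (firstn ma s) (skipn ma s)) else 0) <= Lc b d).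
    { destruct (Nat.leb ma M).
      - destruct (edge_bounds th b d _ _ Hd Hb Hth NS XS) as [L U].
        assert (0 < rho b d ^ d) by (apply pow_lt, rho_pos; auto).
        pose proof (ln_le _ _ H L). pose proof (ln_le (edge_prob th (firstn ma s) (skipn ma s)) 1 ltac:(lra) U). rewrite ln_1 in H1.
        pose proof (Lc_nonneg b d Hd Hb). unfold Lc in *. apply Rabs_le. lra.
      - rewrite Rabs_R0. apply Lc_nonneg; auto. }
    assert (E2 : Rabs (rb_user th M m (skipn ma s)) <= INR (length m) * Lc b d).
    { apply IH. eapply NoDup_app_remove_l; eauto. intros; apply XS, in_or_app; auto. }
    eapply Rle_trans. apply Rabs_triang. change (length (ma :: m)) with (S (length m)). rewrite S_INR. lra.
Qed.

Lemma nat_big X : exists N, forall n, (n >= N)%nat -> X < INR n.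
Proof.
  destruct (archimed X) as [H1 _]. exists (Z.to_nat (up X) + 1)%nat. intros n Hn.
  destruct (Z_le_gt_dec (up X) 0) as [l|l].
  - apply IZR_le in l. pose proof (pos_INR n). lra.
  - apply Rlt_le_trans with (IZR (up X)). lra. rewrite <- (Z2Nat.id (up X)) by lia.
    rewrite <- INR_IZR_INZ. apply le_INR. lia.
Qed.

Lemma abs_of_sq x a : 0 <= a -> x ^ 2 <= a ^ 2 -> Rabs x <= a.
Proof. intros Ha H. unfold Rabs. destruct (Rcase_abs x); nra. Qed.

Definition Ysq ths d n s := sumR (map (fun sg => (cnt sg s - INR n * pl_prob ths sg) ^ 2) (Sig d)).
Definition NN d := INR (length (Sig d)).
Definition CC b d (m : list nat) := 2 * (INR (length m) * Lc b d).
Definition dlt b d eps m := gtot b d eps m / (2 * (NN d * CC b d m + 1)).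

Lemma sumR_const {A} (c : R) (L : list A) : sumR (map (fun _ => c) L) = INR (length L) * c.
Proof. induction L; simpl. ring. rewrite IHL. destruct (length L); simpl; ring. Qed.

Lemma Sig_elem d sg : In sg (Sig d) -> NoDup sg /\ forall x, In x sg -> (x < d)%nat.
Proof.
  intro H. unfold Sig, rankings in H. apply perms_in in H. split.
  eapply Permutation_NoDup; eauto. apply seq_NoDup.
  intros x Hx. apply (Permutation_in _ (Permutation_sym H)) in Hx. apply in_seq in Hx. lia.
Qed.

Lemma det d b m ths M eps n s :
  m <> [] -> (forall a, In a m -> (1 <= a)%nat) -> (list_sum m < d)%nat ->
  Omega d b ths -> (exists a, In a m /\ (a <= M)%nat) -> 0 < eps ->
  (1 <= n)%nat -> In s (samples d n) -> Ysq ths d n s <= (INR n * dlt b d eps m) ^ 2 ->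
  ~ (exists th, is_RB_estimate d b M m s th /\ exists i, (i < d)%nat /\ Rabs (th i - ths i) > eps).
Proof.
  intros Hne Hm1 Hsum Oms Hkept Heps Hn Hs HY [th [[Om Hmax] Hfar]].
  assert (Hd : (1 <= d)%nat) by lia.
  assert (Hb : 0 <= b) by (destruct Oms as [_ B0]; pose proof (B0 0%nat ltac:(lia)); pose proof (Rabs_pos (ths 0%nat)); lra).
  pose proof (Vfar d b m ths th M eps Hne Hm1 Hsum Oms Om Hkept Heps Hfar) as VF.
  pose proof (Hmax ths Oms) as HL.
  pose proof (samples_in d n s Hs) as Hin.
  rewrite (L_RB_cnt ths M m d s Hin), (L_RB_cnt th M m d s Hin) in HL.
  set (gt := gtot b d eps m) in *. set (dl := dlt b d eps m) in *.
  set (C := CC b d m). set (N := NN d).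
  assert (gtp : 0 < gt) by (apply gtot_pos; auto).
  assert (Cn : 0 <= C) by (unfold C, CC; pose proof (Lc_nonneg b d Hd Hb); pose proof (pos_INR (length m)); nra).
  assert (Nn : 0 <= N) by apply pos_INR.
  assert (dlp : 0 < dl) by (unfold dl, dlt; fold gt N C; apply Rdiv_lt_0_compat; auto; nra).
  assert (nn : 1 <= INR n) by (apply (le_INR 1); auto).
  assert (Gb : forall sg, In sg (Sig d) -> Rabs (G ths th M m sg) <= C).
  { intros sg Hsg. destruct (Sig_elem d sg Hsg) as [N1 N2]. unfold G, C, CC.
    destruct Oms as [_ B1]. destruct Om as [_ B2].
    pose proof (rb_bound ths b d M Hd Hb B1 m sg N1 N2). pose proof (rb_bound th b d M Hd Hb B2 m sg N1 N2).
    eapply Rle_trans. apply Rabs_triang. rewrite Rabs_Ropp. lra. }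
  assert (DIFF : sumR (map (fun sg => cnt sg s * rb_user ths M m sg) (Sig d)) -
                 sumR (map (fun sg => cnt sg s * rb_user th M m sg) (Sig d)) =
                 INR n * V ths th M m (seq 0 d) +
                 sumR (map (fun sg => (cnt sg s - INR n * pl_prob ths sg) * G ths th M m sg) (Sig d))).
  { rewrite <- sumR_minus. unfold V. rewrite <- sumR_mult_l. rewrite <- sumR_plus.
    apply sumR_map_ext. intros. unfold G. ring. }
  assert (TERM : forall sg, In sg (Sig d) -> - (INR n * dl * C) <= (cnt sg s - INR n * pl_prob ths sg) * G ths th M m sg).
  { intros sg Hsg. set (x := cnt sg s - INR n * pl_prob ths sg).
    assert (x ^ 2 <= Ysq ths d n s).
    { unfold Ysq. apply (sumR_ge_elem (fun sg => (cnt sg s - INR n * pl_prob ths sg) ^ 2)); auto.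
      intros; apply pow2_ge_0. }
    assert (Rabs x <= INR n * dl) by (apply abs_of_sq; nra).
    pose proof (Gb sg Hsg).
    assert (Rabs (x * G ths th M m sg) <= INR n * dl * C).
    { rewrite Rabs_mult. apply Rmult_le_compat; auto; apply Rabs_pos. }
    pose proof (Rle_abs (- (x * G ths th M m sg))). rewrite Rabs_Ropp in H3. lra. }
  assert (LOW : - (N * (INR n * dl * C)) <= sumR (map (fun sg => (cnt sg s - INR n * pl_prob ths sg) * G ths th M m sg) (Sig d))).
  { eapply Rle_trans; [|apply sumR_le; exact TERM]. rewrite sumR_const. unfold N, NN. lra. }
  assert (SMALL : N * dl * C <= gt / 2).
  { unfold dl, dlt. fold gt N C. apply (Rmult_le_reg_r (2 * (N * C + 1))). nra.
    unfold Rdiv. field_simplify. nra. nra. }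
  assert (0 < INR n * gt / 2) by (apply Rdiv_lt_0_compat; nra).
  assert (INR n * (N * dl * C) <= INR n * (gt / 2)) by (apply Rmult_le_compat_l; lra).
  nra.
Qed.

Theorem mainTheorem4 :
  forall (d : nat) (b : R) (m : list nat) (th_star : nat -> R) (M : nat),
    m <> [] ->
    (forall a, In a m -> (1 <= a)%nat) ->
    (list_sum m < d)%nat ->
    Omega d b th_star ->
    (exists a, In a m /\ (a <= M)%nat) ->   (* M >= min_a m_a *)
    forall eps : R, eps > 0 ->
      Un_cv
        (fun n => prob d th_star n
           (fun sample => exists th,
              is_RB_estimate d b M m sample th /\
              exists i, (i < d)%nat /\ Rabs (th i - th_star i) > eps))
        0.
Proof.
  intros d b m ths M Hne Hm1 Hsum Oms Hkept eps Heps.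
  assert (Hd : (1 <= d)%nat) by lia.
  assert (Hb : 0 <= b) by (destruct Oms as [_ B0]; pose proof (B0 0%nat ltac:(lia)); pose proof (Rabs_pos (ths 0%nat)); lra).
  set (dl := dlt b d eps m). set (N := NN d).
  assert (gtp : 0 < gtot b d eps m) by (apply gtot_pos; auto).
  assert (Cn : 0 <= CC b d m) by (unfold CC; pose proof (Lc_nonneg b d Hd Hb); pose proof (pos_INR (length m)); nra).
  assert (Nn : 0 <= N) by apply pos_INR.
  assert (dlp : 0 < dl) by (unfold dl, dlt; apply Rdiv_lt_0_compat; auto; fold N; nra).
  set (E := fun sample => exists th, is_RB_estimate d b M m sample th /\
              exists i, (i < d)%nat /\ Rabs (th i - ths i) > eps).
  assert (BND : forall n, (1 <= n)%nat -> 0 <= prob d ths n E <= N / (INR n * dl ^ 2)).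
  { intros n Hn. assert (nn : 1 <= INR n) by (apply (le_INR 1); auto).
    assert (ndp : 0 < (INR n * dl) ^ 2) by (apply pow_lt; nra).
    unfold prob. split.
    - apply sumR_nonneg. intros s _. apply Rmult_le_pos. apply (Pr_nonneg ths s).
      unfold indic. destruct (excluded_middle_informative (E s)); lra.
    - apply Rle_trans with (sumR (map (fun s => Pr ths s * (Ysq ths d n s / (INR n * dl) ^ 2)) (samples d n))).
      + apply sumR_le. intros s Hs. apply Rmult_le_compat_l. apply Pr_nonneg.
        assert (0 <= Ysq ths d n s) by (apply sumR_nonneg; intros; apply pow2_ge_0).
        unfold indic. destruct (excluded_middle_informative (E s)) as [HE|HE].
        * destruct (Rle_dec (Ysq ths d n s) ((INR n * dl) ^ 2)) as [Y|Y].
          -- exfalso. exact (det d b m ths M eps n s Hne Hm1 Hsum Oms Hkept Heps Hn Hs Y HE).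
          -- apply (Rmult_le_reg_r ((INR n * dl) ^ 2)); auto. unfold Rdiv.
             rewrite Rmult_assoc, Rinv_l, Rmult_1_r by lra. lra.
        * unfold Rdiv; apply Rmult_le_pos; [auto|left; apply Rinv_0_lt_compat; auto].
      + rewrite (sumR_map_ext _ (fun s => / (INR n * dl) ^ 2 * (Pr ths s * Ysq ths d n s))) by (intros; unfold Rdiv; ring).
        rewrite sumR_mult_l. unfold Ysq.
        rewrite (sumR_map_ext _ (fun s => sumR (map (fun sg => Pr ths s * (cnt sg s - INR n * pl_prob ths sg) ^ 2) (Sig d))))
          by (intros; rewrite <- sumR_mult_l; auto).
        rewrite sumR_swap.
        assert (sumR (map (fun sg => sumR (map (fun s => Pr ths s * (cnt sg s - INR n * pl_prob ths sg) ^ 2) (samples d n))) (Sig d))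
                <= N * INR n).
        { eapply Rle_trans. apply (sumR_le _ (fun _ => INR n)). intros sg Hsg. apply var_bound; auto.
          rewrite sumR_const. unfold N, NN. lra. }
        apply Rle_trans with (/ (INR n * dl) ^ 2 * (N * INR n)).
        apply Rmult_le_compat_l; auto. left; apply Rinv_0_lt_compat; auto.
        right. field. split; lra. }
  intros e He.
  destruct (nat_big (N / (dl ^ 2 * e))) as [N0 HN0].
  exists (max N0 1). intros n Hn. unfold Rdist. rewrite Rminus_0_r.
  assert (Hn1 : (1 <= n)%nat) by lia.
  destruct (BND n Hn1) as [B1 B2]. fold E. rewrite Rabs_right by lra.
  assert (X : N / (dl ^ 2 * e) < INR n) by (apply HN0; lia).
  assert (dl2 : 0 < dl ^ 2) by (apply pow_lt; auto).
  assert (nn : 1 <= INR n) by (apply (le_INR 1); auto).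
  eapply Rle_lt_trans; [exact B2|].
  apply (Rmult_lt_reg_r (INR n * dl ^ 2)). nra. unfold Rdiv. rewrite Rmult_assoc, Rinv_l, Rmult_1_r by nra.
  apply (Rmult_lt_reg_r (/ (dl ^ 2 * e))). apply Rinv_0_lt_compat; nra.
  replace (e * (INR n * dl ^ 2) * / (dl ^ 2 * e)) with (INR n) by (field; split; lra).
  exact X.
Qed.
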